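(* Let $\Theta$ be a set of session type variables. The asynchronous subtyping relation $<:_\Theta$ satisfies the following (whenever the premises hold, so does the conclusion; all types are assumed to be session types over the indicated sets of variables): (i) (reflexivity) $T <:_\Theta T$; (ii) (transitivity) if $S <:_\Theta T$ and $T <:_\Theta U$ then $S <:_\Theta U$; (iii) if $J \subseteq I$ and $T_i <:_\Theta U_i$ for all $i\in J$, then $\oplus_{i\in J}\, p!\ell_i(\mathsf b_i).T_i <:_\Theta \oplus_{i\in I}\, p!\ell_i(\mathsf b_i).U_i$; (iv) if $J\subseteq I$ and $T_i <:_\Theta U_i$ for all $i \in J$, then $\&_{i\in I}\, p?\ell_i(\mathsf b_i).T_i <:_\Theta \&_{i\in J}\, p?\ell_i(\mathsf b_i).U_i$; (v) if $X\notin \Theta$ and $T <:_{\Theta\cup\{X\}} U$, then $\mu X.T <:_\Theta \mu X.U$; (vi) if $T <:_{\{X_1,\dots,X_n\}} U$ and $T_k <:_\Theta U_k$ for $k=1,\dots,n$, then $T[X_1\mapsto T_1,\dots,X_n\mapsto T_n] <:_\Theta U[X_1\mapsto U_1,\dots,X_n\mapsto U_n]$.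
   Context: Fix a set $\mathcal L$ of labels and a set of participants $p,q,r,\dots$. Ground types are $\mathsf b \in \{\mathsf{unit},\mathsf{bool},\mathsf{int}\}$. Session types are generated by $T ::= \mathsf{end} \mid \oplus_{i\in I}\, p!\ell_i(\mathsf b_i).T_i \mid \&_{i\in I}\, p?\ell_i(\mathsf b_i).T_i \mid X \mid \mu X.T$, where $X$ ranges over session type variables, $I$ is finite and non-empty, the labels $\ell_i\in\mathcal L$ are pairwise distinct, $\mu X$ binds $X$, and recursion is guarded (every occurrence of $X$ in $T$ lies inside an internal choice $\oplus$ or external choice $\&$). A single-branch choice is written $p!\ell(\mathsf b).T$ or $p?\ell(\mathsf b).T$. A session type is over $\Theta$ if all its free type variables lie in $\Theta$; closed if it has none. Unfolding: $\mathrm{unf}(\mu X.T) = \mathrm{unf}(T)[X\mapsto \mu X.T]$ and $\mathrm{unf}(T)=T$ if $T$ is not of the form $\mu X.T'$. Four inductively defined relations/predicates (smallest closed under the rules): (a) $U \hookrightarrow^{p!\ell(\mathsf b)} U'$: (base) $\oplus_{i\in I} p!\ell_i(\mathsf b_i).U_i \hookrightarrow^{p!\ell_j(\mathsf b_j)} U_j$ for $j\in I$; (⊕) if $p\neq q$, $J\subseteq I$, and $U_i\hookrightarrow^{p!\ell(\mathsf b)}U_i'$ for all $i\in J$, then $\oplus_{i\in I} q!\ell_i'(\mathsf b_i').U_i \hookrightarrow^{p!\ell(\mathsf b)} \oplus_{i\in J} q!\ell_i'(\mathsf b_i').U_i'$; (&) if $U_i\hookrightarrow^{p!\ell(\mathsf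 b)}U_i'$ for all $i\in I$, then $\&_{i\in I} q?\ell_i'(\mathsf b_i').U_i \hookrightarrow^{p!\ell(\mathsf b)} \&_{i\in I} q?\ell_i'(\mathsf b_i').U_i'$ (here $q$ may equal $p$); (rec) if $U[X\mapsto\mu X.U]\hookrightarrow^{p!\ell(\mathsf b)}U'$ then $\mu X.U\hookrightarrow^{p!\ell(\mathsf b)}U'$. (b) $\mathrm{Sends}_p(T)$: $\mathrm{Sends}_p(\oplus_{i\in I} p!\ell_i(\mathsf b_i).T_i)$; if $\mathrm{Sends}_p(T_j)$ for all $j\in J$ then $\mathrm{Sends}_p(\oplus_{j\in J} q!\ell_j(\mathsf b_j).T_j)$; if $\mathrm{Sends}_p(T)$ then $\mathrm{Sends}_p(\mu X.T)$. (c) $T\hookrightarrow^{p?\ell(\mathsf b)}T'$: the duals of (a): (base) $\&_{i\in I} p?\ell_i(\mathsf b_i).T_i \hookrightarrow^{p?\ell_j(\mathsf b_j)} T_j$; (&) if $p\ne q$, $J\subseteq I$, $T_i\hookrightarrow^{p?\ell(\mathsf b)}T_i'$ for $i\in J$, then $\&_{i\in I} q?\ell_i'(\mathsf b_i').T_i\hookrightarrow^{p?\ell(\mathsf b)}\&_{i\in J} q?\ell_i'(\mathsf b_i').T_i'$; (⊕) if $T_i\hookrightarrow^{p?\ell(\mathsf b)}T_i'$ for all $i\in I$, then $\oplus_{i\in I} q!\ell_i'(\mathsf b_i').T_i\hookrightarrow^{p?\ell(\mathsf b)}\oplus_{i\in I} q!\ell_i'(\mathsf b_i').T_i'$; (rec)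 as in (a). (d) $\mathrm{Recvs}_p(U)$: $\mathrm{Recvs}_p(\&_{i\in I} p?\ell_i(\mathsf b_i).U_i)$; if $\mathrm{Recvs}_p(U_j)$ for all $j\in J$ then $\mathrm{Recvs}_p(\&_{j\in J} q?\ell_j(\mathsf b_j).U_j)$; if $\mathrm{Recvs}_p(U)$ then $\mathrm{Recvs}_p(\mu X.U)$. Asynchronous subtyping $<:_\Theta$ is the largest binary relation on session types over $\Theta$ such that whenever $T <:_\Theta U$: (1) if $\mathrm{unf}(T)=\oplus_{i\in I}p!\ell_i(\mathsf b_i).T_i$ then for every $i\in I$ there is $U_i$ with $U\hookrightarrow^{p!\ell_i(\mathsf b_i)}U_i$ and $T_i<:_\Theta U_i$; (2) if $\mathrm{unf}(T)=\&_{i\in I}p?\ell_i(\mathsf b_i).T_i$ then $\mathrm{Recvs}_p(U)$; (3) if $\mathrm{unf}(U)=\oplus_{i\in I}p!\ell_i(\mathsf b_i).U_i$ then $\mathrm{Sends}_p(T)$; (4) if $\mathrm{unf}(U)=\&_{i\in I}p?\ell_i(\mathsf b_i).U_i$ then for every $i\in I$ there is $T_i$ with $T\hookrightarrow^{p?\ell_i(\mathsf b_i)}T_i$ and $T_i<:_\Theta U_i$; (5) for every $X\in\Theta$, $\mathrm{unf}(T)=X$ iff $\mathrm{unf}(U)=X$. *)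

(* Defs.v *)
(* Session types in locally nameless representation:
   free type variables are names (nat), bound variables are de Bruijn
   indices; mu binds index 0. *)
From Stdlib Require Import List Arith.
Import ListNotations.

Definition label := nat.
Definition participant := nat.
Definition tvar := nat.

Inductive ground : Type := GUnit | GBool | GInt.

Inductive styp : Type :=
| TEnd : styp
| TSend : participant -> list (label * ground * styp) -> styp
| TRecv : participant -> list (label * ground * styp) -> styp
| TFVar : tvar -> styp
| TBVar : nat -> styp
| TRec  : styp -> styp.

Definition br_label (br : label * ground * styp) : label := fst (fst br).

Fixpoint open_rec (k : nat) (u : styp) (T : styp) : styp :=
  match T with
  | TEnd => TEnd
  | TSend p bs => TSend p (map (fun br => match br with (l, b, V) => (l, b, open_rec k u V) end) bs)
  | TRecv p bs => TRecv p (map (fun br => match br with (l, b, V) => (l, b, open_rec k u V) end) bs)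
  | TFVar x => TFVar x
  | TBVar n => if Nat.eqb n k then u else TBVar n
  | TRec V => TRec (open_rec (S k) u V)
  end.
Definition open (T u : styp) : styp := open_rec 0 u T.

Fixpoint close_rec (k : nat) (x : tvar) (T : styp) : styp :=
  match T with
  | TEnd => TEnd
  | TSend p bs => TSend p (map (fun br => match br with (l, b, V) => (l, b, close_rec k x V) end) bs)
  | TRecv p bs => TRecv p (map (fun br => match br with (l, b, V) => (l, b, close_rec k x V) end) bs)
  | TFVar y => if Nat.eqb y x then TBVar k else TFVar y
  | TBVar n => TBVar n
  | TRec V => TRec (close_rec (S k) x V)
  end.

Definition mu (X : tvar) (T : styp) : styp := TRec (close_rec 0 X T).

Fixpoint substf (sigma : tvar -> styp) (T : styp) : styp :=
  match T with
  | TEnd => TEnd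
  | TSend p bs => TSend p (map (fun br => match br with (l, b, V) => (l, b, substf sigma V) end) bs)
  | TRecv p bs => TRecv p (map (fun br => match br with (l, b, V) => (l, b, substf sigma V) end) bs)
  | TFVar y => sigma y
  | TBVar n => TBVar n
  | TRec V => TRec (substf sigma V)
  end.

Fixpoint msub_var (n : nat) (X : nat -> tvar) (Ts : nat -> styp) (y : tvar) : styp :=
  match n with
  | O => TFVar y
  | S m => if Nat.eqb (X m) y then Ts m else msub_var m X Ts y
  end.
Definition msubst (n : nat) (X : nat -> tvar) (Ts : nat -> styp) (T : styp) : styp :=
  substf (msub_var n X Ts) T.

Fixpoint unguarded (k : nat) (T : styp) : Prop :=
  match T with
  | TBVar n => n = k
  | TRec V => unguarded (S k) V
  | _ => False
  end.

Inductive wf_at (Theta : tvar -> Prop) : nat -> styp -> Prop :=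
| wf_end k : wf_at Theta k TEnd
| wf_fvar k x : Theta x -> wf_at Theta k (TFVar x)
| wf_bvar k n : n < k -> wf_at Theta k (TBVar n)
| wf_send k p bs :
    bs <> [] -> NoDup (map br_label bs) ->
    (forall l b V, In (l, b, V) bs -> wf_at Theta k V) ->
    wf_at Theta k (TSend p bs)
| wf_recv k p bs :
    bs <> [] -> NoDup (map br_label bs) ->
    (forall l b V, In (l, b, V) bs -> wf_at Theta k V) ->
    wf_at Theta k (TRecv p bs)
| wf_rec k V : wf_at Theta (S k) V -> ~ unguarded 0 V -> wf_at Theta k (TRec V).

Definition wf (Theta : tvar -> Prop) (T : styp) : Prop := wf_at Theta 0 T.

Inductive Unf : styp -> styp -> Prop :=
| unf_rec V T' : Unf (open V (TRec V)) T' -> Unf (TRec V) T'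
| unf_other T : (forall V, T <> TRec V) -> Unf T T.

Inductive SendStep (p : participant) (l : label) (b : ground) : styp -> styp -> Prop :=
| ss_base bs V : In (l, b, V) bs -> SendStep p l b (TSend p bs) V
| ss_send q bsI bsJ bs' :
    p <> q -> incl bsJ bsI -> NoDup (map br_label bsJ) -> bsJ <> [] ->
    Forall2 (fun br br' => fst br = fst br' /\ SendStep p l b (snd br) (snd br')) bsJ bs' ->
    SendStep p l b (TSend q bsI) (TSend q bs')
| ss_recv q bs bs' :
    Forall2 (fun br br' => fst br = fst br' /\ SendStep p l b (snd br) (snd br')) bs bs' ->
    SendStep p l b (TRecv q bs) (TRecv q bs')
| ss_rec V U' : SendStep p l b (open V (TRec V)) U' -> SendStep p l b (TRec V) U'.

Inductive Sends (p : participant) : styp -> Prop :=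
| sends_base bs : Sends p (TSend p bs)
| sends_send q bs : (forall l b V, In (l, b, V) bs -> Sends p V) -> Sends p (TSend q bs)
| sends_rec V : Sends p V -> Sends p (TRec V).

Inductive RecvStep (p : participant) (l : label) (b : ground) : styp -> styp -> Prop :=
| rs_base bs V : In (l, b, V) bs -> RecvStep p l b (TRecv p bs) V
| rs_recv q bsI bsJ bs' :
    p <> q -> incl bsJ bsI -> NoDup (map br_label bsJ) -> bsJ <> [] ->
    Forall2 (fun br br' => fst br = fst br' /\ RecvStep p l b (snd br) (snd br')) bsJ bs' ->
    RecvStep p l b (TRecv q bsI) (TRecv q bs')
| rs_send q bs bs' :
    Forall2 (fun br br' => fst br = fst br' /\ RecvStep p l b (snd br) (snd br')) bs bs' ->
    RecvStep p l b (TSend q bs) (TSend q bs')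
| rs_rec V U' : RecvStep p l b (open V (TRec V)) U' -> RecvStep p l b (TRec V) U'.

Inductive Recvs (p : participant) : styp -> Prop :=
| recvs_base bs : Recvs p (TRecv p bs)
| recvs_recv q bs : (forall l b V, In (l, b, V) bs -> Recvs p V) -> Recvs p (TRecv q bs)
| recvs_rec V : Recvs p V -> Recvs p (TRec V).

Definition is_async_sim (Theta : tvar -> Prop) (R : styp -> styp -> Prop) : Prop :=
  forall T U, R T U ->
    wf Theta T /\ wf Theta U /\
    (forall p bs, Unf T (TSend p bs) ->
       forall l b Ti, In (l, b, Ti) bs -> exists Ui, SendStep p l b U Ui /\ R Ti Ui) /\
    (forall p bs, Unf T (TRecv p bs) -> Recvs p U) /\
    (forall p bs, Unf U (TSend p bs) -> Sends p T) /\
    (forall p bs, Unf U (TRecv p bs) ->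
       forall l b Ui, In (l, b, Ui) bs -> exists Ti, RecvStep p l b T Ti /\ R Ti Ui) /\
    (forall X, Theta X -> (Unf T (TFVar X) <-> Unf U (TFVar X))).

(* asynchronous subtyping <:_Theta : the largest such relation *)
Definition asub (Theta : tvar -> Prop) (T U : styp) : Prop :=
  exists R, is_async_sim Theta R /\ R T U.

Definition branches (I : list nat) (l : nat -> label) (b : nat -> ground) (T : nat -> styp)
  : list (label * ground * styp) := map (fun i => (l i, b i, T i)) I.

(* Main.v *)
Require Import Defs.
From Stdlib Require Import List Arith Lia Classical.
Import ListNotations.

Definition branch := (label * ground * styp)%type.
Definition bmap (f : styp -> styp) (bs : list branch) : list branch :=
  map (fun br => match br with (l, b, V) => (l, b, f V) end) bs.

Section StypInd.
Variable P : styp -> Prop.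
Hypothesis HE : P TEnd.
Hypothesis HS : forall p bs, Forall (fun br => P (snd br)) bs -> P (TSend p bs).
Hypothesis HR : forall p bs, Forall (fun br => P (snd br)) bs -> P (TRecv p bs).
Hypothesis HF : forall x, P (TFVar x).
Hypothesis HB : forall n, P (TBVar n).
Hypothesis HM : forall V, P V -> P (TRec V).
Fixpoint styp_ind2 (T : styp) : P T :=
  match T with
  | TEnd => HE
  | TSend p bs => HS p bs ((fix go (bs : list branch) : Forall (fun br => P (snd br)) bs :=
        match bs with
        | [] => Forall_nil _
        | (l,b,V) :: bs' => @Forall_cons _ (fun br => P (snd br)) (l,b,V) bs' (styp_ind2 V) (go bs')
        end) bs)
  | TRecv p bs => HR p bs ((fix go (bs : list branch) : Forall (fun br => P (snd br)) bs :=
        match bs with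
        | [] => Forall_nil _
        | (l,b,V) :: bs' => @Forall_cons _ (fun br => P (snd br)) (l,b,V) bs' (styp_ind2 V) (go bs')
        end) bs)
  | TFVar x => HF x
  | TBVar n => HB n
  | TRec V => HM V (styp_ind2 V)
  end.
End StypInd.

Section SSInd.
Variables (p : participant) (l : label) (b : ground).
Variable P : styp -> styp -> Prop.
Hypothesis Hbase : forall bs V, In (l,b,V) bs -> P (TSend p bs) V.
Hypothesis Hsend : forall q bsI bsJ bs', p <> q -> incl bsJ bsI -> NoDup (map br_label bsJ) -> bsJ <> [] ->
   Forall2 (fun br br' => fst br = fst br' /\ SendStep p l b (snd br) (snd br') /\ P (snd br) (snd br')) bsJ bs' ->
   P (TSend q bsI) (TSend q bs').
Hypothesis Hrecv : forall q bs bs',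
   Forall2 (fun br br' => fst br = fst br' /\ SendStep p l b (snd br) (snd br') /\ P (snd br) (snd br')) bs bs' ->
   P (TRecv q bs) (TRecv q bs').
Hypothesis Hrec : forall V U', SendStep p l b (open V (TRec V)) U' -> P (open V (TRec V)) U' -> P (TRec V) U'.
Fixpoint SS_ind2 U U' (H : SendStep p l b U U') {struct H} : P U U' :=
  match H with
  | ss_base _ _ _ bs V Hin => Hbase bs V Hin
  | ss_send _ _ _ q bsI bsJ bs' Hpq Hincl Hnd Hne HF => Hsend q bsI bsJ bs' Hpq Hincl Hnd Hne
      ((fix go xs ys (F : Forall2 (fun br br' => fst br = fst br' /\ SendStep p l b (snd br) (snd br')) xs ys)
         : Forall2 (fun br br' => fst br = fst br' /\ SendStep p l b (snd br) (snd br') /\ P (snd br) (snd br')) xs ys :=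
          match F with
          | @Forall2_nil _ _ _ => @Forall2_nil _ _ _
          | @Forall2_cons _ _ _ x y xs' ys' (conj e s) F' => @Forall2_cons _ _ _ x y xs' ys' (conj e (conj s (SS_ind2 _ _ s))) (go xs' ys' F')
          end) bsJ bs' HF)
  | ss_recv _ _ _ q bs bs' HF => Hrecv q bs bs'
      ((fix go xs ys (F : Forall2 (fun br br' => fst br = fst br' /\ SendStep p l b (snd br) (snd br')) xs ys)
         : Forall2 (fun br br' => fst br = fst br' /\ SendStep p l b (snd br) (snd br') /\ P (snd br) (snd br')) xs ys :=
          match F with
          | @Forall2_nil _ _ _ => @Forall2_nil _ _ _
          | @Forall2_cons _ _ _ x y xs' ys' (conj e s) F' => @Forall2_cons _ _ _ x y xs' ys' (conj e (conj s (SS_ind2 _ _ s))) (go xs' ys' F')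
          end) bs bs' HF)
  | ss_rec _ _ _ V U' H' => Hrec V U' H' (SS_ind2 _ _ H')
  end.
End SSInd.

Section RSInd.
Variables (p : participant) (l : label) (b : ground).
Variable P : styp -> styp -> Prop.
Hypothesis Hbase : forall bs V, In (l,b,V) bs -> P (TRecv p bs) V.
Hypothesis Hrecv : forall q bsI bsJ bs', p <> q -> incl bsJ bsI -> NoDup (map br_label bsJ) -> bsJ <> [] ->
   Forall2 (fun br br' => fst br = fst br' /\ RecvStep p l b (snd br) (snd br') /\ P (snd br) (snd br')) bsJ bs' ->
   P (TRecv q bsI) (TRecv q bs').
Hypothesis Hsend : forall q bs bs',
   Forall2 (fun br br' => fst br = fst br' /\ RecvStep p l b (snd br) (snd br') /\ P (snd br) (snd br')) bs bs' ->
   P (TSend q bs) (TSend q bs').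
Hypothesis Hrec : forall V U', RecvStep p l b (open V (TRec V)) U' -> P (open V (TRec V)) U' -> P (TRec V) U'.
Fixpoint RS_ind2 U U' (H : RecvStep p l b U U') {struct H} : P U U' :=
  match H with
  | rs_base _ _ _ bs V Hin => Hbase bs V Hin
  | rs_recv _ _ _ q bsI bsJ bs' Hpq Hincl Hnd Hne HF => Hrecv q bsI bsJ bs' Hpq Hincl Hnd Hne
      ((fix go xs ys (F : Forall2 (fun br br' => fst br = fst br' /\ RecvStep p l b (snd br) (snd br')) xs ys)
         : Forall2 (fun br br' => fst br = fst br' /\ RecvStep p l b (snd br) (snd br') /\ P (snd br) (snd br')) xs ys :=
          match F with
          | @Forall2_nil _ _ _ => @Forall2_nil _ _ _
          | @Forall2_cons _ _ _ x y xs' ys' (conj e s) F' => @Forall2_cons _ _ _ x y xs' ys' (conj e (conj s (RS_ind2 _ _ s))) (go xs' ys' F')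
          end) bsJ bs' HF)
  | rs_send _ _ _ q bs bs' HF => Hsend q bs bs'
      ((fix go xs ys (F : Forall2 (fun br br' => fst br = fst br' /\ RecvStep p l b (snd br) (snd br')) xs ys)
         : Forall2 (fun br br' => fst br = fst br' /\ RecvStep p l b (snd br) (snd br') /\ P (snd br) (snd br')) xs ys :=
          match F with
          | @Forall2_nil _ _ _ => @Forall2_nil _ _ _
          | @Forall2_cons _ _ _ x y xs' ys' (conj e s) F' => @Forall2_cons _ _ _ x y xs' ys' (conj e (conj s (RS_ind2 _ _ s))) (go xs' ys' F')
          end) bs bs' HF)
  | rs_rec _ _ _ V U' H' => Hrec V U' H' (RS_ind2 _ _ H')
  end.
End RSInd.

Lemma In_bmap f bs l b V : In (l,b,V) (bmap f bs) <-> exists V0, In (l,b,V0) bs /\ V = f V0.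
Proof.
  induction bs as [|[[l0 b0] V0] bs IH]; simpl.
  - split; [tauto| intros [? [[] _]]].
  - split.
    + intros [E|H]. * inversion E; subst. eauto. * apply IH in H as [V1 [H1 H2]]. eauto.
    + intros [V1 [[E|H1] H2]]. * inversion E; subst. auto. * right. apply IH. eauto.
Qed.
Lemma In_bmap_2 f bs l b V : In (l,b,V) bs -> In (l,b,f V) (bmap f bs).
Proof. intros H. apply In_bmap. eauto. Qed.
Lemma bmap_labels f bs : map br_label (bmap f bs) = map br_label bs.
Proof. induction bs as [|[[l0 b0] V0] bs IH]; simpl; f_equal; auto. Qed.
Lemma bmap_nil f bs : bmap f bs <> [] <-> bs <> [].
Proof. destruct bs; unfold bmap; simpl; split; intros H; auto; intros E; discriminate. Qed.
Lemma bmap_comp f g bs : bmap f (bmap g bs) = bmap (fun x => f (g x)) bs.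
Proof. induction bs as [|[[l0 b0] V0] bs IH]; simpl; f_equal; auto. Qed.
Lemma bmap_ext f g bs : (forall l b V, In (l,b,V) bs -> f V = g V) -> bmap f bs = bmap g bs.
Proof.
  induction bs as [|[[l0 b0] V0] bs IH]; simpl; intros H; auto.
  f_equal. rewrite (H l0 b0 V0); auto. apply IH. intros; eapply H; eauto.
Qed.
Lemma bmap_id f bs : (forall l b V, In (l,b,V) bs -> f V = V) -> bmap f bs = bs.
Proof.
  induction bs as [|[[l0 b0] V0] bs IH]; simpl; intros H; auto.
  f_equal. rewrite (H l0 b0 V0); auto. apply IH. intros; eapply H; eauto.
Qed.

Lemma open_send k u p bs : open_rec k u (TSend p bs) = TSend p (bmap (open_rec k u) bs). Proof. reflexivity. Qed.
Lemma open_recv k u p bs : open_rec k u (TRecv p bs) = TRecv p (bmap (open_rec k u) bs). Proof. reflexivity. Qed.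
Lemma close_send k x p bs : close_rec k x (TSend p bs) = TSend p (bmap (close_rec k x) bs). Proof. reflexivity. Qed.
Lemma close_recv k x p bs : close_rec k x (TRecv p bs) = TRecv p (bmap (close_rec k x) bs). Proof. reflexivity. Qed.
Lemma subst_send s p bs : substf s (TSend p bs) = TSend p (bmap (substf s) bs). Proof. reflexivity. Qed.
Lemma subst_recv s p bs : substf s (TRecv p bs) = TRecv p (bmap (substf s) bs). Proof. reflexivity. Qed.

Lemma Forall_In_br (P : styp -> Prop) bs : Forall (fun br : branch => P (snd br)) bs -> forall l b V, In (l,b,V) bs -> P V.
Proof. rewrite Forall_forall. intros H l b V Hin. apply (H _ Hin). Qed.

Lemma wf_open_id Th k T : wf_at Th k T -> forall j u, k <= j -> open_rec j u T = T.
Proof.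
  induction 1; intros j u Hj; simpl; auto.
  - destruct (Nat.eqb_spec n j); auto. lia.
  - f_equal. apply bmap_id. intros; eauto.
  - f_equal. apply bmap_id. intros; eauto.
  - f_equal. apply IHwf_at. lia.
Qed.

Lemma wf_weaken Th k T : wf_at Th k T -> forall k', k <= k' -> wf_at Th k' T.
Proof.
  induction 1; intros k' Hk; econstructor; eauto; try lia.
  apply IHwf_at. lia.
Qed.

Lemma wf_mono Th Th' k T : wf_at Th k T -> (forall x, Th x -> Th' x) -> wf_at Th' k T.
Proof. induction 1; intros HT; econstructor; eauto. Qed.

Lemma wf_not_unguarded Th k u : wf_at Th k u -> forall j, k <= j -> ~ unguarded j u.
Proof.
  induction 1; intros j Hj; simpl; auto; try tauto.
  - lia.
  - apply IHwf_at. lia.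
Qed.

Lemma unguarded_open u : (forall j, ~ unguarded j u) -> forall V i j, unguarded j (open_rec i u V) -> unguarded j V.
Proof.
  intros Hu V. induction V; intros i j; simpl; auto.
  - destruct (Nat.eqb_spec n i); simpl; auto. intros H. exfalso; eapply Hu; eauto.
  - apply IHV.
Qed.

Lemma wf_open Th k V : wf_at Th k V -> forall k' u, k = S k' -> wf_at Th 0 u -> wf_at Th k' (open_rec k' u V).
Proof.
  induction 1; intros k' u Ek Hu; subst; simpl.
  - constructor.
  - constructor; auto.
  - destruct (Nat.eqb_spec n k').
    + eapply wf_weaken; eauto; lia.
    + constructor. lia.
  - change (wf_at Th k' (open_rec k' u (TSend p bs))). rewrite open_send. constructor.
    + apply bmap_nil; auto.
    + rewrite bmap_labels; auto.
    + intros l0 b0 V0 Hin. apply In_bmap in Hin as [V1 [Hin ->]]. eauto.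
  - change (wf_at Th k' (open_rec k' u (TRecv p bs))). rewrite open_recv. constructor.
    + apply bmap_nil; auto.
    + rewrite bmap_labels; auto.
    + intros l0 b0 V0 Hin. apply In_bmap in Hin as [V1 [Hin ->]]. eauto.
  - constructor.
    + apply IHwf_at; auto.
    + intros Hg. apply H0. eapply unguarded_open; eauto.
      intros j. eapply wf_not_unguarded; eauto. lia.
Qed.

Lemma wf_open0 Th V u : wf_at Th 1 V -> wf_at Th 0 u -> wf_at Th 0 (open V u).
Proof. intros. eapply wf_open; eauto. Qed.

Lemma wf_rec_open Th V : wf Th (TRec V) -> wf Th (open V (TRec V)).
Proof. intros H. unfold wf in *. inversion H; subst. apply wf_open0; auto. Qed.

Ltac fa H Hin := let H' := fresh "HF" in pose proof (proj1 (Forall_forall _ _) H _ Hin) as H'; simpl in H'.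

Fixpoint rdepth T := match T with TRec V => S (rdepth V) | _ => 0 end.
Fixpoint hd T := match T with TRec V => hd V | _ => T end.

Lemma hd_notrec T V : hd T <> TRec V.
Proof. induction T; simpl; congruence. Qed.

Lemma unguarded_hd T : forall j, unguarded j T <-> hd T = TBVar (j + rdepth T).
Proof.
  induction T; intros j; simpl; try (split; [tauto|congruence]).
  - split; intros H. + subst. f_equal. lia. + inversion H. lia.
  - rewrite IHT. replace (S j + rdepth T) with (j + S (rdepth T)) by lia. tauto.
Qed.

Lemma wf_hd Th k T : wf_at Th k T -> forall m, hd T = TBVar m -> rdepth T <= m < k + rdepth T.
Proof.
  induction 1; intros m Hm; simpl in *; try discriminate.
  - inversion Hm; subst. lia.
  - specialize (IHwf_at m Hm).
    assert (m <> rdepth V). { intros E. apply H0. apply unguarded_hd. rewrite Hm. f_equal. lia. }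
    lia.
Qed.

Lemma open_hd T : (forall m, hd T <> TBVar m) -> forall k u,
  rdepth (open_rec k u T) = rdepth T /\ hd (open_rec k u T) = open_rec (k + rdepth T) u (hd T).
Proof.
  induction T; intros Hh k u; simpl in *; try (split; reflexivity); try (split; [reflexivity| rewrite Nat.add_0_r; reflexivity]).
  - exfalso. eapply Hh; eauto.
  - destruct (IHT Hh (S k) u) as [E1 E2]. rewrite E1, E2. split; auto. f_equal. lia.
Qed.

Lemma wf_rec_hd Th V : wf Th (TRec V) -> forall m, hd V <> TBVar m.
Proof.
  intros H m Hm. inversion H as [| | | | |k0 V0 HV Hg]; subst.
  pose proof (wf_hd _ _ _ HV m Hm). apply Hg. apply unguarded_hd. rewrite Hm. f_equal. lia.
Qed.

Lemma Unf_exists_n n : forall Th T, rdepth T <= n -> wf Th T -> exists Z, Unf T Z.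
Proof.
  induction n; intros Th T Hd Hw.
  - exists T. destruct T; simpl in Hd; try lia; constructor; congruence.
  - destruct T; try (exists ((match T with _ => _ end)); fail);
      try (eexists; constructor; congruence).
    pose proof (wf_rec_hd _ _ Hw) as Hh.
    destruct (open_hd _ Hh 0 (TRec T)) as [E1 _].
    destruct (IHn Th (open T (TRec T))) as [Z HZ].
    + unfold open. rewrite E1. simpl in Hd. lia.
    + apply wf_rec_open; auto.
    + exists Z. constructor. auto.
Qed.

Lemma Unf_exists Th T : wf Th T -> exists Z, Unf T Z.
Proof. intros. eapply Unf_exists_n; eauto. Qed.

Lemma Unf_det T Z : Unf T Z -> forall Z', Unf T Z' -> Z = Z'.
Proof.
  induction 1; intros Z' H'.
  - inversion H'; subst; auto. exfalso; eapply H0; eauto.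
  - inversion H'; subst; auto. exfalso; eapply H; eauto.
Qed.

Lemma Unf_notrec T Z : Unf T Z -> forall V, Z <> TRec V.
Proof. induction 1; auto. Qed.

Lemma Unf_self T : (forall V, T <> TRec V) -> Unf T T.
Proof. intros; constructor; auto. Qed.

Lemma Unf_wf Th T Z : Unf T Z -> wf Th T -> wf Th Z.
Proof. induction 1; intros Hw; auto. apply IHUnf. apply wf_rec_open; auto. Qed.

Lemma Unf_idem T Z : Unf T Z -> Unf Z Z.
Proof. intros H. constructor. eapply Unf_notrec; eauto. Qed.

Lemma Unf_fvar_hd Th T x : wf Th T -> Unf T (TFVar x) -> hd T = TFVar x.
Proof.
  intros Hw H. remember (TFVar x) as Z. revert Hw. induction H; intros Hw; subst.
  - pose proof (wf_rec_hd _ _ Hw) as Hh. simpl.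
    specialize (IHUnf eq_refl (wf_rec_open _ _ Hw)).
    destruct (open_hd _ Hh 0 (TRec V)) as [_ E2]. unfold open in IHUnf. rewrite E2 in IHUnf.
    destruct (hd V) eqn:E; simpl in IHUnf; try discriminate; auto.
    + exfalso; eapply Hh; eauto.
  - reflexivity.
Qed.

Lemma close_hd_unguarded T x : hd T = TFVar x -> forall j, unguarded j (close_rec j x T).
Proof.
  induction T; simpl; intros H j; try discriminate.
  - inversion H; subst. rewrite Nat.eqb_refl. simpl. auto.
  - apply IHT; auto.
Qed.

Lemma SS_Unf_l p l b T Z : Unf T Z -> forall Y, SendStep p l b Z Y -> SendStep p l b T Y.
Proof. induction 1; intros Y HY; auto. apply ss_rec. auto. Qed.
Lemma SS_Unf_r p l b T Z : Unf T Z -> forall Y, SendStep p l b T Y -> SendStep p l b Z Y.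
Proof.
  induction 1; intros Y HY; auto. inversion HY; subst. auto.
Qed.
Lemma RS_Unf_l p l b T Z : Unf T Z -> forall Y, RecvStep p l b Z Y -> RecvStep p l b T Y.
Proof. induction 1; intros Y HY; auto. apply rs_rec. auto. Qed.
Lemma RS_Unf_r p l b T Z : Unf T Z -> forall Y, RecvStep p l b T Y -> RecvStep p l b Z Y.
Proof.
  induction 1; intros Y HY; auto. inversion HY; subst. auto.
Qed.

Lemma Sends_open p V : Sends p V -> forall k u, Sends p (open_rec k u V).
Proof.
  induction 1; intros k u; simpl.
  - constructor.
  - change (Sends p (open_rec k u (TSend q bs))). rewrite open_send. apply sends_send.
    intros l0 b0 V0 Hin. apply In_bmap in Hin as [V1 [Hin ->]]. eauto.
  - constructor. auto.
Qed.
Lemma Recvs_open p V : Recvs p V -> forall k u, Recvs p (open_rec k u V).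
Proof.
  induction 1; intros k u; simpl.
  - constructor.
  - change (Recvs p (open_rec k u (TRecv q bs))). rewrite open_recv. apply recvs_recv.
    intros l0 b0 V0 Hin. apply In_bmap in Hin as [V1 [Hin ->]]. eauto.
  - constructor. auto.
Qed.

Lemma Sends_open_inv p u V : forall k, Sends p (open_rec k u V) -> Sends p V \/ Sends p u.
Proof.
  induction V using styp_ind2; intros k Hs; simpl in Hs.
  - inversion Hs.
  - change (Sends p (open_rec k u (TSend p0 bs))) in Hs. rewrite open_send in Hs.
    inversion Hs; subst.
    + left. constructor.
    + destruct (classic (Sends p u)) as [Hu|Hu]; [right; auto|left].
      apply sends_send. intros l0 b0 V0 Hin.
      destruct (Forall_In_br (fun V => forall k, Sends p (open_rec k u V) -> Sends p V \/ Sends p u) _ H _ _ _ Hin k) as [HH|HH]; auto.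
      eapply H1. apply In_bmap_2. eauto. tauto.
  - change (Sends p (open_rec k u (TRecv p0 bs))) in Hs. rewrite open_recv in Hs. inversion Hs.
  - inversion Hs.
  - destruct (Nat.eqb n k); auto; inversion Hs.
  - inversion Hs; subst. destruct (IHV (S k) H0); auto. left. constructor. auto.
Qed.
Lemma Recvs_open_inv p u V : forall k, Recvs p (open_rec k u V) -> Recvs p V \/ Recvs p u.
Proof.
  induction V using styp_ind2; intros k Hs; simpl in Hs.
  - inversion Hs.
  - change (Recvs p (open_rec k u (TSend p0 bs))) in Hs. rewrite open_send in Hs. inversion Hs.
  - change (Recvs p (open_rec k u (TRecv p0 bs))) in Hs. rewrite open_recv in Hs.
    inversion Hs; subst.
    + left. constructor.
    + destruct (classic (Recvs p u)) as [Hu|Hu]; [right; auto|left].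
      apply recvs_recv. intros l0 b0 V0 Hin.
      destruct (Forall_In_br (fun V => forall k, Recvs p (open_rec k u V) -> Recvs p V \/ Recvs p u) _ H _ _ _ Hin k) as [HH|HH]; auto.
      eapply H1. apply In_bmap_2. eauto. tauto.
  - inversion Hs.
  - destruct (Nat.eqb n k); auto; inversion Hs.
  - inversion Hs; subst. destruct (IHV (S k) H0); auto. left. constructor. auto.
Qed.

Lemma Sends_Unf p T Z : Unf T Z -> (Sends p T <-> Sends p Z).
Proof.
  induction 1; [|tauto]. rewrite <- IHUnf. split; intros H'.
  - inversion H'; subst. apply Sends_open. auto.
  - destruct (Sends_open_inv _ _ _ _ H'); auto. constructor; auto.
Qed.
Lemma Recvs_Unf p T Z : Unf T Z -> (Recvs p T <-> Recvs p Z).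
Proof.
  induction 1; [|tauto]. rewrite <- IHUnf. split; intros H'.
  - inversion H'; subst. apply Recvs_open. auto.
  - destruct (Recvs_open_inv _ _ _ _ H'); auto. constructor; auto.
Qed.

Lemma Forall2_In_l {A B} (P : A -> B -> Prop) xs ys : Forall2 P xs ys -> forall x, In x xs -> exists y, In y ys /\ P x y.
Proof. induction 1; simpl; intros x0 Hx; [tauto|]. destruct Hx as [<-|Hx]; eauto. destruct (IHForall2 _ Hx) as [y' [? ?]]; eauto. Qed.
Lemma Forall2_In_r {A B} (P : A -> B -> Prop) xs ys : Forall2 P xs ys -> forall y, In y ys -> exists x, In x xs /\ P x y.
Proof. induction 1; simpl; intros y0 Hy; [tauto|]. destruct Hy as [<-|Hy]; eauto. destruct (IHForall2 _ Hy) as [x' [? ?]]; eauto. Qed.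
Lemma list_choice {A B} (P : A -> B -> Prop) xs : (forall x, In x xs -> exists y, P x y) -> exists ys, Forall2 P xs ys.
Proof.
  induction xs as [|x xs IH]; intros H. - exists []. constructor.
  - destruct (H x (or_introl eq_refl)) as [y Hy]. destruct IH as [ys Hys]. { intros; apply H; simpl; auto. }
    exists (y :: ys). constructor; auto.
Qed.
Lemma Forall2_labels (P : branch -> branch -> Prop) (xs ys : list branch) :
  Forall2 (fun a b => fst a = fst b /\ P a b) xs ys -> map br_label xs = map br_label ys.
Proof. induction 1; simpl; auto. destruct H as [E _]. unfold br_label at 1 3. rewrite E. f_equal; auto. Qed.
Lemma Forall2_nonnil {A B} (P : A -> B -> Prop) xs ys : Forall2 P xs ys -> xs <> [] -> ys <> [].
Proof. destruct 1; auto. intros _ E; discriminate. Qed.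
Lemma Forall2_impl' {A B} (P Q : A -> B -> Prop) xs ys : (forall x y, In x xs -> In y ys -> P x y -> Q x y) -> Forall2 P xs ys -> Forall2 Q xs ys.
Proof. intros H F. induction F; constructor; auto. - apply H; simpl; auto. - apply IHF. intros; apply H; simpl; auto. Qed.
Lemma br_eta (br : branch) : br = (fst (fst br), snd (fst br), snd br).
Proof. destruct br as [[? ?] ?]; reflexivity. Qed.

Definition SimCond (Th : tvar -> Prop) (R : styp -> styp -> Prop) (T U : styp) : Prop :=
    wf Th T /\ wf Th U /\
    (forall p bs, Unf T (TSend p bs) ->
       forall l b Ti, In (l, b, Ti) bs -> exists Ui, SendStep p l b U Ui /\ R Ti Ui) /\
    (forall p bs, Unf T (TRecv p bs) -> Recvs p U) /\
    (forall p bs, Unf U (TSend p bs) -> Sends p T) /\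
    (forall p bs, Unf U (TRecv p bs) ->
       forall l b Ui, In (l, b, Ui) bs -> exists Ti, RecvStep p l b T Ti /\ R Ti Ui) /\
    (forall X, Th X -> (Unf T (TFVar X) <-> Unf U (TFVar X))).

Lemma SimCond_mono Th (R R' : styp -> styp -> Prop) T U : (forall a b, R a b -> R' a b) -> SimCond Th R T U -> SimCond Th R' T U.
Proof.
  intros HR [H1 [H2 [H3 [H4 [H5 [H6 H7]]]]]]. repeat split; auto.
  - intros p bs Hu l b Ti Hin. destruct (H3 p bs Hu l b Ti Hin) as [Ui [? ?]]; eauto.
  - intros p bs Hu l b Ui Hin. destruct (H6 p bs Hu l b Ui Hin) as [Ti [? ?]]; eauto.
  - apply H7; auto. - apply H7; auto.
Qed.

Lemma asub_sim Th T U : asub Th T U -> SimCond Th (asub Th) T U.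
Proof.
  intros [R [HR HTU]]. apply (SimCond_mono Th R). - intros a b Hab. exists R; auto. - apply HR; auto.
Qed.

Lemma coind Th (R : styp -> styp -> Prop) :
  (forall T U, R T U -> SimCond Th (fun a b => R a b \/ asub Th a b) T U) -> forall T U, R T U -> asub Th T U.
Proof.
  intros H T U HTU. exists (fun a b => R a b \/ asub Th a b). split; auto.
  intros a b [Hab|Hab].
  - apply H; auto.
  - apply (SimCond_mono Th (asub Th)); auto. apply asub_sim; auto.
Qed.

Lemma asub_wf Th T U : asub Th T U -> wf Th T /\ wf Th U.
Proof. intros H. apply asub_sim in H. destruct H as [? [? _]]; auto. Qed.

Lemma SimCond_unf Th R T T2 U U2 Z Z' : Unf T Z -> Unf T2 Z -> Unf U Z' -> Unf U2 Z' -> wf Th T2 -> wf Th U2 ->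
  SimCond Th R T U -> SimCond Th R T2 U2.
Proof.
  intros HT HT2 HU HU2 W1 W2 [_ [_ [H3 [H4 [H5 [H6 H7]]]]]]. repeat split; auto.
  - intros p bs Hu l b Ti Hin. pose proof (Unf_det _ _ HT2 _ Hu); subst.
    destruct (H3 p bs HT l b Ti Hin) as [Ui [S1 S2]]. exists Ui; split; auto.
    apply (SS_Unf_l _ _ _ _ _ HU2). apply (SS_Unf_r _ _ _ _ _ HU). auto.
  - intros p bs Hu. pose proof (Unf_det _ _ HT2 _ Hu); subst.
    apply (Recvs_Unf _ _ _ HU2). apply (Recvs_Unf _ _ _ HU). eauto.
  - intros p bs Hu. pose proof (Unf_det _ _ HU2 _ Hu); subst.
    apply (Sends_Unf _ _ _ HT2). apply (Sends_Unf _ _ _ HT). eauto.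
  - intros p bs Hu l b Ui Hin. pose proof (Unf_det _ _ HU2 _ Hu); subst.
    destruct (H6 p bs HU l b Ui Hin) as [Ti [S1 S2]]. exists Ti; split; auto.
    apply (RS_Unf_l _ _ _ _ _ HT2). apply (RS_Unf_r _ _ _ _ _ HT). auto.
  - intros Hx. pose proof (Unf_det _ _ HT2 _ Hx); subst.
    assert (Unf U (TFVar X)) by (apply H7; auto). pose proof (Unf_det _ _ HU _ H0); subst. auto.
  - intros Hx. pose proof (Unf_det _ _ HU2 _ Hx); subst.
    assert (Unf T (TFVar X)) by (apply H7; auto). pose proof (Unf_det _ _ HT _ H0); subst. auto.
Qed.

Lemma asub_unf Th T T2 U U2 Z Z' : asub Th T U -> Unf T Z -> Unf T2 Z -> Unf U Z' -> Unf U2 Z' -> wf Th T2 -> wf Th U2 ->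
  asub Th T2 U2.
Proof.
  intros H HT HT2 HU HU2 W1 W2.
  apply (coind Th (fun a b => a = T2 /\ b = U2)); auto.
  intros a b [-> ->]. apply (SimCond_mono Th (asub Th)); auto.
  apply (SimCond_unf Th (asub Th) T T2 U U2 Z Z'); auto. apply asub_sim; auto.
Qed.

Lemma asub_unfold_l Th V U : asub Th (TRec V) U -> asub Th (open V (TRec V)) U.
Proof.
  intros H. destruct (asub_wf _ _ _ H) as [W1 W2].
  destruct (Unf_exists _ _ W1) as [Z HZ]. destruct (Unf_exists _ _ W2) as [Z' HZ'].
  eapply asub_unf; eauto. inversion HZ; subst; auto. exfalso; eapply H0; eauto.
  apply wf_rec_open; auto.
Qed.
Lemma asub_unfold_r Th V U : asub Th U (TRec V) -> asub Th U (open V (TRec V)).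
Proof.
  intros H. destruct (asub_wf _ _ _ H) as [W1 W2].
  destruct (Unf_exists _ _ W1) as [Z HZ]. destruct (Unf_exists _ _ W2) as [Z' HZ'].
  eapply asub_unf; eauto. inversion HZ'; subst; auto. exfalso; eapply H0; eauto.
  apply wf_rec_open; auto.
Qed.

Fixpoint dual (T : styp) : styp :=
  match T with
  | TEnd => TEnd
  | TSend p bs => TRecv p (map (fun br => match br with (l, b, V) => (l, b, dual V) end) bs)
  | TRecv p bs => TSend p (map (fun br => match br with (l, b, V) => (l, b, dual V) end) bs)
  | TFVar x => TFVar x
  | TBVar n => TBVar n
  | TRec V => TRec (dual V)
  end.
Lemma dual_send p bs : dual (TSend p bs) = TRecv p (bmap dual bs). Proof. reflexivity. Qed.
Lemma dual_recv p bs : dual (TRecv p bs) = TSend p (bmap dual bs). Proof. reflexivity. Qed.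

Lemma dual_invol T : dual (dual T) = T.
Proof.
  induction T using styp_ind2; auto.
  - rewrite dual_send, dual_recv, bmap_comp. f_equal. apply bmap_id. intros l0 b0 V0 Hin; fa H Hin; auto.
  - rewrite dual_recv, dual_send, bmap_comp. f_equal. apply bmap_id. intros l0 b0 V0 Hin; fa H Hin; auto.
  - simpl. congruence.
Qed.

Lemma dual_open u V : forall k, dual (open_rec k u V) = open_rec k (dual u) (dual V).
Proof.
  induction V using styp_ind2; intros k; auto.
  - rewrite open_send, dual_send, dual_send, open_recv, !bmap_comp. f_equal. apply bmap_ext.
    intros l0 b0 V0 Hin; fa H Hin; auto.
  - rewrite open_recv, dual_recv, dual_recv, open_send, !bmap_comp. f_equal. apply bmap_ext.
    intros l0 b0 V0 Hin; fa H Hin; auto.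
  - simpl. destruct (Nat.eqb n k); auto.
  - simpl. f_equal. auto.
Qed.

Lemma unguarded_dual T : forall j, unguarded j (dual T) <-> unguarded j T.
Proof. induction T; simpl; intros; try tauto. auto. Qed.

Lemma wf_dual Th k T : wf_at Th k T -> wf_at Th k (dual T).
Proof.
  induction 1.
  - constructor. - constructor; auto. - constructor; auto.
  - rewrite dual_send. constructor. + apply bmap_nil; auto. + rewrite bmap_labels; auto.
    + intros l b V Hin. apply In_bmap in Hin as [V0 [Hin ->]]. eauto.
  - rewrite dual_recv. constructor. + apply bmap_nil; auto. + rewrite bmap_labels; auto.
    + intros l b V Hin. apply In_bmap in Hin as [V0 [Hin ->]]. eauto.
  - simpl. constructor; auto. rewrite unguarded_dual. auto.
Qed.
Lemma wf_dual_iff Th T : wf Th (dual T) <-> wf Th T.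
Proof. split; intros H. - rewrite <- (dual_invol T). apply wf_dual; auto. - apply wf_dual; auto. Qed.

Lemma Unf_dual T Z : Unf T Z -> Unf (dual T) (dual Z).
Proof.
  induction 1.
  - simpl. constructor. unfold open in *. rewrite dual_open in IHUnf. auto.
  - constructor. intros V E. destruct T; simpl in E; try discriminate. eapply H; eauto.
Qed.
Lemma Unf_dual_iff T Z : Unf (dual T) Z <-> Unf T (dual Z).
Proof.
  split; intros H.
  - apply Unf_dual in H. rewrite dual_invol in H. auto.
  - apply Unf_dual in H. rewrite dual_invol in H. auto.
Qed.

Lemma incl_bmap f xs ys : incl xs ys -> incl (bmap f xs) (bmap f ys).
Proof. intros H x Hx. unfold bmap in *. apply in_map_iff in Hx as [y [<- Hy]]. apply (in_map (fun br : branch => match br with (l, b, V) => (l, b, f V) end)). auto. Qed.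

Lemma Forall2_bmap (P Q : styp -> styp -> Prop) f g xs ys :
  Forall2 (fun br br' => fst br = fst br' /\ P (snd br) (snd br')) xs ys ->
  (forall a c, P a c -> Q (f a) (g c)) ->
  Forall2 (fun br br' => fst br = fst br' /\ Q (snd br) (snd br')) (bmap f xs) (bmap g ys).
Proof.
  induction 1; intros HPQ; simpl; constructor; auto.
  destruct x as [[? ?] ?], y as [[? ?] ?]; simpl in *. destruct H as [E HP]. split; auto.
Qed.

Lemma SS_dual p l b T T' : SendStep p l b T T' -> RecvStep p l b (dual T) (dual T').
Proof.
  induction 1 using SS_ind2.
  - rewrite dual_send. constructor. apply In_bmap_2. auto.
  - rewrite !dual_send. apply rs_recv with (bmap dual bsJ); auto.
    + apply incl_bmap; auto. + rewrite bmap_labels; auto. + apply bmap_nil; auto.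
    + apply (Forall2_bmap (fun x y => RecvStep p l b (dual x) (dual y))); [|auto].
      eapply Forall2_impl; [|eauto]. simpl. intros a c [E [_ H']]. auto.
  - rewrite !dual_recv. constructor.
    apply (Forall2_bmap (fun x y => RecvStep p l b (dual x) (dual y))); [|auto].
    eapply Forall2_impl; [|eauto]. simpl. intros a c [E [_ H']]. auto.
  - simpl. constructor. unfold open in *. rewrite dual_open in IHSendStep. auto.
Qed.
Lemma RS_dual p l b T T' : RecvStep p l b T T' -> SendStep p l b (dual T) (dual T').
Proof.
  induction 1 using RS_ind2.
  - rewrite dual_recv. constructor. apply In_bmap_2. auto.
  - rewrite !dual_recv. apply ss_send with (bmap dual bsJ); auto.
    + apply incl_bmap; auto. + rewrite bmap_labels; auto. + apply bmap_nil; auto.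
    + apply (Forall2_bmap (fun x y => SendStep p l b (dual x) (dual y))); [|auto].
      eapply Forall2_impl; [|eauto]. simpl. intros a c [E [_ H']]. auto.
  - rewrite !dual_send. constructor.
    apply (Forall2_bmap (fun x y => SendStep p l b (dual x) (dual y))); [|auto].
    eapply Forall2_impl; [|eauto]. simpl. intros a c [E [_ H']]. auto.
  - simpl. constructor. unfold open in *. rewrite dual_open in IHRecvStep. auto.
Qed.
Lemma SS_dual_iff p l b T T' : SendStep p l b (dual T) T' <-> RecvStep p l b T (dual T').
Proof.
  split; intros H.
  - apply SS_dual in H. rewrite dual_invol in H. auto.
  - apply RS_dual in H. rewrite dual_invol in H. auto.
Qed.
Lemma RS_dual_iff p l b T T' : RecvStep p l b (dual T) T' <-> SendStep p l b T (dual T').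
Proof.
  split; intros H.
  - apply RS_dual in H. rewrite dual_invol in H. auto.
  - apply SS_dual in H. rewrite dual_invol in H. auto.
Qed.

Lemma Sends_dual p T : Sends p T -> Recvs p (dual T).
Proof.
  induction 1.
  - rewrite dual_send. constructor.
  - rewrite dual_send. apply recvs_recv. intros l b V Hin. apply In_bmap in Hin as [V0 [Hin ->]]. eauto.
  - simpl. constructor. auto.
Qed.
Lemma Recvs_dual p T : Recvs p T -> Sends p (dual T).
Proof.
  induction 1.
  - rewrite dual_recv. constructor.
  - rewrite dual_recv. apply sends_send. intros l b V Hin. apply In_bmap in Hin as [V0 [Hin ->]]. eauto.
  - simpl. constructor. auto.
Qed.

Lemma asub_dual Th T U : asub Th T U -> asub Th (dual U) (dual T).
Proof.
  intros H.
  apply (coind Th (fun a c => exists T U, a = dual U /\ c = dual T /\ asub Th T U)); [|eauto].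
  clear. intros a c [T [U [-> [-> H]]]].
  destruct (asub_sim _ _ _ H) as [W1 [W2 [H1 [H2 [H3 [H4 H5]]]]]].
  repeat split.
  - apply wf_dual; auto. - apply wf_dual; auto.
  - intros p bs Hu l b Ti Hin. apply Unf_dual_iff in Hu. rewrite dual_send in Hu.
    destruct (H4 _ _ Hu l b (dual Ti)) as [Tj [S1 S2]]. { apply In_bmap_2; auto. }
    exists (dual Tj). split. + apply RS_dual; auto. + left. exists Tj, (dual Ti). rewrite dual_invol. auto.
  - intros p bs Hu. apply Unf_dual_iff in Hu. rewrite dual_recv in Hu. apply Sends_dual. eauto.
  - intros p bs Hu. apply Unf_dual_iff in Hu. rewrite dual_send in Hu. apply Recvs_dual. eauto.
  - intros p bs Hu l b Ui Hin. apply Unf_dual_iff in Hu. rewrite dual_recv in Hu.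
    destruct (H1 _ _ Hu l b (dual Ui)) as [Uj [S1 S2]]. { apply In_bmap_2; auto. }
    exists (dual Uj). split. + apply SS_dual; auto. + left. exists (dual Ui), Uj. rewrite dual_invol. auto.
  - intros Hx. apply Unf_dual_iff in Hx. simpl in Hx. apply Unf_dual_iff. simpl. apply H5; auto.
  - intros Hx. apply Unf_dual_iff in Hx. simpl in Hx. apply Unf_dual_iff. simpl. apply H5; auto.
Qed.
Lemma asub_dual_iff Th T U : asub Th (dual U) (dual T) <-> asub Th T U.
Proof.
  split; intros H. - apply asub_dual in H. rewrite !dual_invol in H. auto. - apply asub_dual; auto.
Qed.

Lemma wf_send_inv Th p bs : wf Th (TSend p bs) -> bs <> [] /\ NoDup (map br_label bs) /\ forall l b V, In (l,b,V) bs -> wf Th V.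
Proof. intros H. inversion H; subst. auto. Qed.
Lemma wf_recv_inv Th p bs : wf Th (TRecv p bs) -> bs <> [] /\ NoDup (map br_label bs) /\ forall l b V, In (l,b,V) bs -> wf Th V.
Proof. intros H. inversion H; subst. auto. Qed.

Lemma SS_wf Th p l b U U' : SendStep p l b U U' -> wf Th U -> wf Th U'.
Proof.
  induction 1 using SS_ind2; intros Hw.
  - apply wf_send_inv in Hw as [_ [_ H']]. eauto.
  - apply wf_send_inv in Hw as [Hne [Hnd Hb]]. constructor.
    + eapply Forall2_nonnil; eauto.
    + rewrite <- (Forall2_labels _ _ _ H3). auto.
    + intros l0 b0 V Hin. destruct (Forall2_In_r _ _ _ H3 _ Hin) as [x [Hx [E [S IH]]]].
      apply IH. destruct x as [[? ?] ?]. eapply Hb. apply H0. eauto.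
  - apply wf_recv_inv in Hw as [Hne [Hnd Hb]]. constructor.
    + eapply Forall2_nonnil; eauto.
    + rewrite <- (Forall2_labels _ _ _ H). auto.
    + intros l0 b0 V Hin. destruct (Forall2_In_r _ _ _ H _ Hin) as [x [Hx [E [S IH]]]].
      apply IH. destruct x as [[? ?] ?]. eapply Hb. eauto.
  - apply IHSendStep. apply wf_rec_open; auto.
Qed.

Lemma RS_wf Th p l b U U' : RecvStep p l b U U' -> wf Th U -> wf Th U'.
Proof.
  intros H Hw. apply RS_dual in H. apply wf_dual_iff. eapply SS_wf; eauto. apply wf_dual; auto.
Qed.

Lemma send_closure Th q bs W : wf Th (TSend q bs) -> wf Th W ->
  (forall l b X, In (l,b,X) bs -> exists Wl, SendStep q l b W Wl /\ asub Th X Wl) ->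
  asub Th (TSend q bs) W.
Proof.
  intros W1 W2 H.
  apply (coind Th (fun a c => exists q bs, a = TSend q bs /\ wf Th a /\ wf Th c /\
     (forall l b X, In (l,b,X) bs -> exists Wl, SendStep q l b c Wl /\ asub Th X Wl))); [|eauto 10].
  clear. intros a W [q [bs [-> [W1 [W2 H]]]]].
  assert (HU : Unf (TSend q bs) (TSend q bs)) by (apply Unf_self; congruence).
  repeat split; auto.
  - intros p bs0 Hu l b Ti Hin. pose proof (Unf_det _ _ HU _ Hu) as E. inversion E; subst.
    destruct (H _ _ _ Hin) as [Wl [? ?]]; eauto.
  - intros p bs0 Hu. pose proof (Unf_det _ _ HU _ Hu) as E. discriminate.
  - intros r ws Hu. destruct (Nat.eq_dec r q) as [->|Hrq]; [constructor|].
    apply sends_send. intros l b X Hin. destruct (H _ _ _ Hin) as [Wl [S1 S2]].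
    apply (SS_Unf_r _ _ _ _ _ Hu) in S1. inversion S1; subst; [congruence|].
    destruct (asub_sim _ _ _ S2) as [_ [_ [_ [_ [HH5 _]]]]]. eapply HH5. apply Unf_self. congruence.
  - intros r ws Hu m bm V Hin.
    assert (forall br, In br bs -> exists br', fst br = fst br' /\ RecvStep r m bm (snd br) (snd br') /\
              exists V', SendStep q (fst (fst br)) (snd (fst br)) V V' /\ asub Th (snd br') V') as Hc.
    { intros [[l b] X] HX. destruct (H _ _ _ HX) as [Wl [S1 S2]].
      apply (SS_Unf_r _ _ _ _ _ Hu) in S1. inversion S1; subst.
      destruct (Forall2_In_l _ _ _ H3 _ Hin) as [[[m' bm'] V'] [Hin' [E S3]]]. simpl in E. inversion E; subst.
      destruct (asub_sim _ _ _ S2) as [_ [_ [_ [_ [_ [HH6 _]]]]]].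
      assert (HUr : Unf (TRecv r bs') (TRecv r bs')) by (apply Unf_self; congruence).
      destruct (HH6 _ _ HUr _ _ _ Hin') as [Xm [S4 S5]].
      exists (l, b, Xm). simpl. split; auto. split; auto. exists V'. split; auto. }
    apply list_choice in Hc as [bs' Hbs'].
    exists (TSend q bs'). split.
    + constructor. eapply Forall2_impl; [|eauto]. simpl. intros a c [E [S _]]. auto.
    + left. exists q, bs'. split; auto.
      apply wf_send_inv in W1 as [Hne [Hnd Hb]].
      split; [|split].
      * constructor. -- eapply Forall2_nonnil; eauto.
        -- rewrite <- (Forall2_labels _ _ _ Hbs'). auto.
        -- intros l b X Hin'. destruct (Forall2_In_r _ _ _ Hbs' _ Hin') as [x [Hx [E [S [V' [S1 S2]]]]]].
           simpl in S2. eapply (proj1 (asub_wf _ _ _ S2)).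
      * pose proof (Unf_wf _ _ _ Hu W2) as WW. apply wf_recv_inv in WW as [_ [_ Hb']]. eauto.
      * intros l b X Hin'. destruct (Forall2_In_r _ _ _ Hbs' _ Hin') as [[[l' b'] x] [Hx [E [S [V' [S1 S2]]]]]].
        simpl in *. inversion E; subst. eauto.
  - intros Hx. pose proof (Unf_det _ _ HU _ Hx). discriminate.
  - intros Hx. apply wf_send_inv in W1 as [Hne _]. destruct bs as [|[[l b] Xh] bs]; [congruence|].
    destruct (H l b Xh) as [Wl [S1 _]]; [simpl; auto|]. apply (SS_Unf_r _ _ _ _ _ Hx) in S1. inversion S1.
Qed.

Lemma recv_closure Th T r ws : wf Th T -> wf Th (TRecv r ws) ->
  (forall m bm V, In (m,bm,V) ws -> exists Tm, RecvStep r m bm T Tm /\ asub Th Tm V) ->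
  asub Th T (TRecv r ws).
Proof.
  intros W1 W2 H. apply asub_dual_iff. rewrite dual_recv. apply send_closure.
  - rewrite <- dual_recv. apply wf_dual; auto.
  - apply wf_dual; auto.
  - intros l b X Hin. apply In_bmap in Hin as [V0 [Hin ->]]. destruct (H _ _ _ Hin) as [Tm [S1 S2]].
    exists (dual Tm). split. + apply RS_dual; auto. + apply asub_dual; auto.
Qed.

Lemma asub_refl Th T : wf Th T -> asub Th T T.
Proof.
  intros Hw. apply (coind Th (fun a c => a = c /\ wf Th a)); [|auto].
  clear. intros a c [<- Hw]. repeat split; auto.
  - intros p bs Hu l b Ti Hin. exists Ti. split.
    + eapply SS_Unf_l; eauto. constructor. auto.
    + left. split; auto. apply (Unf_wf _ _ _ Hu) in Hw. apply wf_send_inv in Hw as [_ [_ Hb]]. eauto.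
  - intros p bs Hu. apply (Recvs_Unf _ _ _ Hu). constructor.
  - intros p bs Hu. apply (Sends_Unf _ _ _ Hu). constructor.
  - intros p bs Hu l b Ti Hin. exists Ti. split.
    + eapply RS_Unf_l; eauto. constructor. auto.
    + left. split; auto. apply (Unf_wf _ _ _ Hu) in Hw. apply wf_recv_inv in Hw as [_ [_ Hb]]. eauto.
Qed.

Lemma F2_pair {A B C D} (P : A->B->Prop) (Q1 : A -> C -> Prop) (Q2 : B -> D -> Prop) (Q3 : C -> D -> Prop) xs ys :
  Forall2 P xs ys -> (forall x y, In x xs -> P x y -> exists c d, Q1 x c /\ Q2 y d /\ Q3 c d) ->
  exists cs ds, Forall2 Q1 xs cs /\ Forall2 Q2 ys ds /\ Forall2 Q3 cs ds.
Proof.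
  induction 1; intros H'. - exists [], []. repeat constructor.
  - destruct (H' x y (or_introl eq_refl) H) as [c [d [? [? ?]]]].
    destruct IHForall2 as [cs [ds [? [? ?]]]]. { intros; apply H'; simpl; auto. }
    exists (c :: cs), (d :: ds). repeat constructor; auto.
Qed.

Lemma F2_comp {A B C D} (P : A->B->Prop) (Q : B -> C -> Prop) (R1 : A -> D -> Prop) (R2 : D -> C -> Prop) xs ys zs :
  Forall2 P xs ys -> Forall2 Q ys zs -> (forall x y z, In x xs -> P x y -> Q y z -> exists w, R1 x w /\ R2 w z) ->
  exists ws, Forall2 R1 xs ws /\ Forall2 R2 ws zs.
Proof.
  intros F. revert zs. induction F; intros zs G H'.
  - inversion G; subst. exists []. split; constructor.
  - inversion G; subst. destruct (H' x y y0 (or_introl eq_refl) H H2) as [w [? ?]].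
    destruct (IHF l'0 H4) as [ws [? ?]]. { intros; eapply H'; simpl; eauto. }
    exists (w :: ws). split; constructor; auto.
Qed.

Lemma F2_zip3 {A B C D} (P : A->B->Prop) (Q : A -> C -> Prop) (R1 : A -> D -> Prop) (R2 : B -> D -> Prop) (R3 : C -> D -> Prop) xs ys zs :
  Forall2 P xs ys -> Forall2 Q xs zs -> (forall x y z, In x xs -> P x y -> Q x z -> exists w, R1 x w /\ R2 y w /\ R3 z w) ->
  exists ws, Forall2 R1 xs ws /\ Forall2 R2 ys ws /\ Forall2 R3 zs ws.
Proof.
  intros F. revert zs. induction F; intros zs G H'.
  - inversion G; subst. exists []. repeat constructor.
  - inversion G; subst. destruct (H' x y y0 (or_introl eq_refl) H H2) as [w [? [? ?]]].
    destruct (IHF l'0 H4) as [ws [? [? ?]]]. { intros; eapply H'; simpl; eauto. }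
    exists (w :: ws). repeat constructor; auto.
Qed.

Lemma F2_flip {A B} (P : A -> B -> Prop) xs ys : Forall2 P xs ys -> Forall2 (fun y x => P x y) ys xs.
Proof. induction 1; constructor; auto. Qed.

Lemma F2_zs {A B} (P : A -> B -> Prop) xs ys : Forall2 P xs ys ->
  exists zs, xs = map fst zs /\ ys = map snd zs /\ forall z, In z zs -> P (fst z) (snd z).
Proof.
  induction 1. - exists []. simpl. intuition.
  - destruct IHForall2 as [zs [-> [-> Hz]]]. exists ((x,y) :: zs). simpl. intuition. subst; auto.
Qed.

Lemma F2_of_zs {A B} (P : A -> B -> Prop) zs : (forall z, In z zs -> P (fst z) (snd z)) -> Forall2 P (map fst zs) (map snd zs).
Proof. induction zs; simpl; intros H; constructor; auto. Qed.

Lemma nodup_label_uniq (bs : list branch) l b b' X Y : NoDup (map br_label bs) -> In (l,b,X) bs -> In (l,b',Y) bs -> b = b' /\ X = Y.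
Proof.
  induction bs as [|br bs IH]; simpl; [tauto|]. intros Hnd H1 H2. inversion Hnd as [|? ? Hn Hnd']; subst.
  destruct H1 as [E1|H1]; destruct H2 as [E2|H2].
  - subst. inversion E2; auto.
  - subst. exfalso. apply Hn. apply (in_map br_label) in H2. exact H2.
  - subst. exfalso. apply Hn. apply (in_map br_label) in H1. exact H1.
  - eauto.
Qed.

Lemma nodup_label_eq (bs : list branch) x y : NoDup (map br_label bs) -> In x bs -> In y bs -> br_label x = br_label y -> x = y.
Proof.
  destruct x as [[l b] X], y as [[l' b'] Y]. unfold br_label; simpl. intros Hnd H1 H2 <-.
  destruct (nodup_label_uniq _ _ _ _ _ _ Hnd H1 H2); subst; auto.
Qed.

Lemma Forall2_labels_gen (P : branch -> branch -> Prop) (xs ys : list branch) :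
  Forall2 P xs ys -> (forall a c, P a c -> fst a = fst c) -> map br_label xs = map br_label ys.
Proof. induction 1; simpl; intros H'; auto. unfold br_label at 1 3. rewrite (H' _ _ H). f_equal; auto. Qed.

Lemma In_br_fst (bs : list branch) x : In x bs -> In (fst (fst x), snd (fst x), snd x) bs.
Proof. rewrite <- br_eta. auto. Qed.

Inductive SSH (p : participant) (l : label) (b : ground) : nat -> styp -> styp -> Prop :=
| sh_base n bs V : In (l, b, V) bs -> SSH p l b n (TSend p bs) V
| sh_send n q bsI bsJ bs' :
    p <> q -> incl bsJ bsI -> NoDup (map br_label bsJ) -> bsJ <> [] ->
    Forall2 (fun br br' => fst br = fst br' /\ SSH p l b n (snd br) (snd br')) bsJ bs' ->
    SSH p l b (S n) (TSend q bsI) (TSend q bs')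
| sh_recv n q bs bs' :
    Forall2 (fun br br' => fst br = fst br' /\ SSH p l b n (snd br) (snd br')) bs bs' ->
    SSH p l b (S n) (TRecv q bs) (TRecv q bs')
| sh_rec n V U' : SSH p l b n (open V (TRec V)) U' -> SSH p l b (S n) (TRec V) U'.

Lemma SSH_mono p l b n : forall T T', SSH p l b n T T' -> forall m, n <= m -> SSH p l b m T T'.
Proof.
  induction n; intros T T' H m Hm.
  - inversion H; subst. constructor; auto.
  - destruct m as [|m]; [lia|]. inversion H; subst.
    + constructor; auto.
    + eapply sh_send; eauto. eapply Forall2_impl; [|eauto]. simpl. intros a c [E H']. split; auto. apply IHn; auto. lia.
    + eapply sh_recv; eauto. eapply Forall2_impl; [|eauto]. simpl. intros a c [E H']. split; auto. apply IHn; auto. lia.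
    + apply sh_rec. apply IHn; auto. lia.
Qed.

Lemma SSH_SS p l b n : forall T T', SSH p l b n T T' -> SendStep p l b T T'.
Proof.
  induction n; intros T T' H.
  - inversion H; subst. constructor; auto.
  - inversion H; subst.
    + constructor; auto.
    + eapply ss_send; eauto. eapply Forall2_impl; [|eauto]. simpl. intros a c [E H']. split; auto.
    + eapply ss_recv; eauto. eapply Forall2_impl; [|eauto]. simpl. intros a c [E H']. split; auto.
    + apply ss_rec. apply IHn; auto.
Qed.

Lemma F2_height (P : nat -> styp -> styp -> Prop) (xs ys : list branch) :
  (forall n m a c, P n a c -> n <= m -> P m a c) ->
  Forall2 (fun br br' => fst br = fst br' /\ exists n, P n (snd br) (snd br')) xs ys ->
  exists n, Forall2 (fun br br' => fst br = fst br' /\ P n (snd br) (snd br')) xs ys.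
Proof.
  intros Hm. induction 1. - exists 0. constructor.
  - destruct H as [E [n Hn]]. destruct IHForall2 as [k Hk]. exists (max n k). constructor.
    + split; auto. eapply Hm; eauto. lia.
    + eapply Forall2_impl; [|eauto]. simpl. intros a c [E' H']. split; auto. eapply Hm; eauto. lia.
Qed.

Lemma SS_SSH p l b T T' : SendStep p l b T T' -> exists n, SSH p l b n T T'.
Proof.
  induction 1 using SS_ind2.
  - exists 0. constructor; auto.
  - destruct (F2_height (SSH p l b) bsJ bs') as [n Hn].
    + intros; eapply SSH_mono; eauto.
    + eapply Forall2_impl; [|eauto]. simpl. intros a c [E [_ H']]. auto.
    + exists (S n). eapply sh_send; eauto.
  - destruct (F2_height (SSH p l b) bs bs') as [n Hn].
    + intros; eapply SSH_mono; eauto.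
    + eapply Forall2_impl; [|eauto]. simpl. intros a c [E [_ H']]. auto.
    + exists (S n). eapply sh_recv; eauto.
  - destruct IHSendStep as [n Hn]. exists (S n). constructor; auto.
Qed.

Inductive RecvsH (p : participant) : nat -> styp -> Prop :=
| rh_base n bs : RecvsH p n (TRecv p bs)
| rh_recv n q bs : (forall l b V, In (l, b, V) bs -> RecvsH p n V) -> RecvsH p (S n) (TRecv q bs)
| rh_rec n V : RecvsH p n V -> RecvsH p (S n) (TRec V).

Lemma RecvsH_mono p n : forall T, RecvsH p n T -> forall m, n <= m -> RecvsH p m T.
Proof.
  induction n; intros T H m Hm.
  - inversion H; subst. constructor.
  - destruct m as [|m]; [lia|]. inversion H; subst.
    + constructor.
    + constructor. intros; eapply IHn; eauto; lia.
    + constructor. eapply IHn; eauto; lia.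
Qed.

Lemma Recvs_RecvsH p T : Recvs p T -> exists n, RecvsH p n T.
Proof.
  induction 1.
  - exists 0. constructor.
  - assert (exists n, forall l b V, In (l,b,V) bs -> RecvsH p n V) as [n Hn].
    { clear H. induction bs as [|[[l0 b0] V0] bs IH]. - exists 0. simpl. tauto.
      - destruct (H0 l0 b0 V0) as [n1 Hn1]; [simpl; auto|].
        destruct IH as [n2 Hn2]. { intros; eapply H0; simpl; eauto. }
        exists (max n1 n2). intros l b V [E|Hin].
        + inversion E; subst. eapply RecvsH_mono; eauto. lia.
        + eapply RecvsH_mono; eauto. lia. }
    exists (S n). constructor. auto.
  - destruct IHRecvs as [n Hn]. exists (S n). constructor; auto.
Qed.

Lemma RecvsH_Recvs p n T : RecvsH p n T -> Recvs p T.
Proof. induction 1; constructor; auto. Qed.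

Lemma RecvsH_open p n V : RecvsH p n V -> forall k u, RecvsH p n (open_rec k u V).
Proof.
  induction 1; intros k u.
  - simpl. constructor.
  - change (RecvsH p (S n) (open_rec k u (TRecv q bs))). rewrite open_recv. constructor.
    intros l0 b0 V0 Hin. apply In_bmap in Hin as [V1 [Hin ->]]. eauto.
  - simpl. constructor. auto.
Qed.

Lemma RecvsH_unf p n : forall T, RecvsH p n T -> exists q bs, Unf T (TRecv q bs) /\ RecvsH p n (TRecv q bs).
Proof.
  induction n; intros T H.
  - inversion H; subst. exists p, bs. split; [apply Unf_self; congruence|constructor].
  - inversion H; subst.
    + exists p, bs. split; [apply Unf_self; congruence|constructor].
    + exists q, bs. split; [apply Unf_self; congruence|]. auto.
    + apply RecvsH_open with (k := 0) (u := TRec V) in H1. destruct (IHn _ H1) as [q [bs [H2 H3]]].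
      exists q, bs. split. * constructor. auto. * eapply RecvsH_mono; eauto.
Qed.

Lemma RecvsH_RS p n T : RecvsH p n T -> forall r m bm T', r <> p -> RecvStep r m bm T T' -> RecvsH p n T'.
Proof.
  intros H r m bm T' Hrp HS. revert n H. induction HS using RS_ind2; intros n HH.
  - inversion HH; subst; [congruence|]. eapply RecvsH_mono; eauto.
  - inversion HH; subst.
    + constructor.
    + constructor. intros l0 b0 V Hin. destruct (Forall2_In_r _ _ _ H3 _ Hin) as [x [Hx [E [_ IH]]]].
      apply IH. destruct x as [[? ?] ?]. eapply H6. apply H0. eauto.
  - inversion HH.
  - inversion HH; subst. eapply RecvsH_mono; [apply IHHS; apply RecvsH_open; eauto| lia].
Qed.

Lemma lemmaB Th p : forall h T, RecvsH p h T -> forall U, asub Th T U -> Recvs p U.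
Proof.
  induction h as [h IHo] using lt_wf_ind. intros T HT U HTU.
  destruct (RecvsH_unf _ _ _ HT) as [q [bs [Hu Hq]]].
  destruct (asub_sim _ _ _ HTU) as [_ [_ [_ [H2 _]]]].
  pose proof (H2 _ _ Hu) as HRq.
  destruct (Nat.eq_dec q p) as [->|Hqp]; [exact HRq|].
  inversion Hq; subst; [congruence|]. rename n into n0.
  assert (Hbr : forall l b V, In (l,b,V) bs -> RecvsH p n0 V) by auto. clear Hq H1.
  destruct (Recvs_RecvsH _ _ HRq) as [g Hg].
  clear HT HRq H2.
  revert U T bs Hu HTU Hbr Hg.
  induction g as [g IHi] using lt_wf_ind. intros U T0 bs0 Hu HTU Hbr Hg.
  destruct (RecvsH_unf _ _ _ Hg) as [r [ws [HuU Hr]]].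
  apply (Recvs_Unf _ _ _ HuU).
  destruct (Nat.eq_dec r p) as [->|Hrp]; [constructor|].
  apply recvs_recv. intros m bm W Hin.
  destruct (asub_sim _ _ _ HTU) as [_ [_ [_ [_ [_ [H4 _]]]]]].
  destruct (H4 _ _ HuU _ _ _ Hin) as [Tm [S1 S2]].
  apply (RS_Unf_r _ _ _ _ _ Hu) in S1.
  destruct (Nat.eq_dec r q) as [->|Hrq].
  - inversion S1; subst; [|congruence]. eapply (IHo n0); [lia| eapply Hbr; eauto | eauto].
  - inversion S1; subst; [congruence|].
    inversion Hr; subst; [congruence|].
    eapply (IHi n); [lia| | eauto | | eauto].
    + apply Unf_self. congruence.
    + intros l0 b0 V Hin'. destruct (Forall2_In_r _ _ _ H7 _ Hin') as [x [Hx [E Sx]]].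
      destruct x as [[l1 b1] X]. eapply RecvsH_RS; [| eauto | exact Sx]. eapply Hbr. apply H2. eauto.
Qed.

Lemma lemmaB' Th p T U : Recvs p T -> asub Th T U -> Recvs p U.
Proof. intros H1 H2. destruct (Recvs_RecvsH _ _ H1) as [h Hh]. eapply lemmaB; eauto. Qed.

Lemma lemmaC Th p T U : Sends p U -> asub Th T U -> Sends p T.
Proof.
  intros H1 H2. apply Sends_dual in H1. apply asub_dual in H2.
  pose proof (lemmaB' _ _ _ _ H1 H2) as H3. apply Recvs_dual in H3. rewrite dual_invol in H3. auto.
Qed.

Lemma F2_incl {A B} (P : A -> B -> Prop) xs ys L : Forall2 P xs ys -> (forall x y, P x y -> In y L) -> incl ys L.
Proof. induction 1; intros H'; intros z Hz; simpl in Hz; [tauto|]. destruct Hz as [<-|Hz]; eauto. apply IHForall2; auto. Qed.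

Lemma commuteE p l b r m bm T Tm : RecvStep r m bm T Tm ->
  forall h T', SSH p l b h T T' -> exists Y, SSH p l b h Tm Y /\ RecvStep r m bm T' Y.
Proof.
  induction 1 using RS_ind2; intros h T' HS.
  - inversion HS as [| |n0 q0 bs0 bs1 HF|]; subst.
    destruct (Forall2_In_l _ _ _ HF _ H) as [[[m' bm'] Y] [HY [E HY']]].
    simpl in E. inversion E; subst. exists Y. split.
    + eapply SSH_mono; eauto.
    + constructor. auto.
  - inversion HS as [| |n0 q0 bs0 bs1 HF|]; subst.
    destruct (F2_pair _
       (fun j d => In d bs1 /\ fst j = fst d)
       (fun e y => fst e = fst y /\ SSH p l b n0 (snd e) (snd y))
       (fun d y => fst d = fst y /\ RecvStep r m bm (snd d) (snd y)) bsJ bs' H3) as [ds [Ys [F1 [F2 F3]]]].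
    + intros x y Hx [E [Sx IH]].
      destruct (Forall2_In_l _ _ _ HF _ (H0 _ Hx)) as [d [Hd [Ed Sd]]].
      destruct (IH _ _ Sd) as [Y [SY RY]].
      exists d, (fst y, Y). simpl. repeat split; auto. congruence.
    + exists (TRecv q Ys). split.
      * apply sh_recv. auto.
      * apply rs_recv with ds; auto.
        -- eapply F2_incl; eauto. simpl. tauto.
        -- rewrite <- (Forall2_labels_gen _ _ _ F1); auto. simpl. tauto.
        -- eapply Forall2_nonnil; eauto.
  - inversion HS as [n0 bs0 V Hin| n0 q0 bsI bsJ ds Hpq Hincl Hnd Hne HF| |]; subst.
    + destruct (Forall2_In_l _ _ _ H _ Hin) as [y [Hy [E [Sy _]]]].
      exists (snd y). split.
      * constructor. destruct y as [[? ?] ?]. simpl in *. inversion E; subst. auto.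
      * auto.
    + destruct (F2_pair _
       (fun j e => In e bs' /\ fst j = fst e)
       (fun d y => fst d = fst y /\ RecvStep r m bm (snd d) (snd y))
       (fun e y => fst e = fst y /\ SSH p l b n0 (snd e) (snd y)) bsJ ds HF) as [es [Ys [F1 [F2 F3]]]].
      * intros x d Hx [E Sx].
        destruct (Forall2_In_l _ _ _ H _ (Hincl _ Hx)) as [e [He [Ee [Re IH]]]].
        destruct (IH _ _ Sx) as [Y [SY RY]].
        exists e, (fst d, Y). simpl. repeat split; auto. congruence.
      * exists (TSend q Ys). split.
        -- apply sh_send with es; auto.
           ++ eapply F2_incl; eauto. simpl. tauto.
           ++ rewrite <- (Forall2_labels_gen _ _ _ F1); auto. simpl. tauto.
           ++ eapply Forall2_nonnil; eauto.
        -- apply rs_send. auto.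
  - inversion HS as [| | |n0 V0 U0 H']; subst.
    destruct (IHRecvStep _ _ H') as [Y [SY RY]]. exists Y. split; auto. eapply SSH_mono; eauto.
Qed.

Inductive prune : styp -> styp -> Prop :=
| pr_end : prune TEnd TEnd
| pr_fvar x : prune (TFVar x) (TFVar x)
| pr_bvar n : prune (TBVar n) (TBVar n)
| pr_send p xs cs : (forall l b a, In (l,b,a) xs -> exists c, In (l,b,c) cs /\ prune a c) -> prune (TSend p xs) (TSend p cs)
| pr_recv p xs cs : Forall2 (fun x y => fst x = fst y /\ prune (snd x) (snd y)) xs cs -> prune (TRecv p xs) (TRecv p cs)
| pr_rec V W : prune V W -> prune (TRec V) (TRec W).

Lemma prune_refl T : prune T T.
Proof.
  induction T using styp_ind2; constructor; auto.
  - intros l b a Hin. exists a. split; auto. fa H Hin. auto.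
  - induction bs as [|br bs IH]; constructor; inversion H; subst; auto.
Qed.

Lemma F2_trans_F {A} (P : A -> Prop) (R : A -> A -> Prop) xs ys zs : Forall P xs -> Forall2 R xs ys -> Forall2 R ys zs ->
  (forall x y z, P x -> R x y -> R y z -> R x z) -> Forall2 R xs zs.
Proof.
  intros HP F1. revert zs. induction F1; intros zs F2 H'; inversion F2; subst; constructor; inversion HP; subst; eauto.
Qed.

Lemma prune_trans A : forall B C, prune A B -> prune B C -> prune A C.
Proof.
  induction A using styp_ind2; intros B C H1 H2;
    inversion H1 as [| | |? ? cs1 Hm1| ? ? cs1 F1| ? W1 P1]; subst;
    inversion H2 as [| | |? ? cs2 Hm2| ? ? cs2 F2| ? W2 P2]; subst; try constructor.
  - intros l b a Hin. destruct (Hm1 _ _ _ Hin) as [c [Hc Pc]]. destruct (Hm2 _ _ _ Hc) as [d [Hd Pd]].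
    exists d. split; auto. fa H Hin. eauto.
  - eapply F2_trans_F; eauto. simpl. intros x y z Hx [E1 Q1] [E2 Q2]. split; [congruence|]. eauto.
  - eauto.
Qed.

Lemma prune_open u u' : prune u u' -> forall V W, prune V W -> forall k, prune (open_rec k u V) (open_rec k u' W).
Proof.
  intros Hu V. induction V using styp_ind2; intros W HW k;
    inversion HW as [| | |? ? cs1 Hm1| ? ? cs1 F1| ? W1 P1]; subst; simpl.
  - constructor.
  - change (prune (open_rec k u (TSend p bs)) (open_rec k u' (TSend p cs1))). rewrite !open_send. constructor.
    intros l b a Hin. apply In_bmap in Hin as [a0 [Hin ->]]. destruct (Hm1 _ _ _ Hin) as [c [Hc Pc]].
    exists (open_rec k u' c). split. + apply In_bmap_2; auto. + fa H Hin. auto.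
  - change (prune (open_rec k u (TRecv p bs)) (open_rec k u' (TRecv p cs1))). rewrite !open_recv. constructor.
    clear HW. revert cs1 F1. induction bs as [|[[l0 b0] V0] bs IH]; intros cs F; inversion F; subst; constructor.
    + destruct y as [[l1 b1] V1]. destruct H2 as [E P]. simpl in *. split; auto. inversion H; subst. auto.
    + inversion H; subst. apply IH; auto.
  - constructor.
  - destruct (Nat.eqb n k); [auto|constructor].
  - constructor. auto.
Qed.

Lemma prune_unf U Z : Unf U Z -> forall V, prune U V -> exists Z', Unf V Z' /\ prune Z Z'.
Proof.
  induction 1; intros W HW.
  - inversion HW; subst. destruct (IHUnf (open W0 (TRec W0))) as [Z' [HZ1 HZ2]].
    + apply prune_open; auto.
    + exists Z'. split; auto. constructor. auto.
  - exists W. split; auto. constructor. intros V E. subst. inversion HW; subst. eapply H; eauto.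
Qed.

Lemma prune_recvs p U : Recvs p U -> forall V, prune U V -> Recvs p V.
Proof.
  induction 1; intros W HW; inversion HW as [| | |? ? cs1 Hm1| ? ? cs1 F1| ? W1 P1]; subst.
  - constructor.
  - apply recvs_recv. intros l b V Hin. destruct (Forall2_In_r _ _ _ F1 _ Hin) as [[[l' b'] X] [HX [E P]]].
    simpl in *. inversion E; subst. eauto.
  - constructor. auto.
Qed.

Lemma prune_send_inv X p cs : prune X (TSend p cs) -> exists xs, X = TSend p xs.
Proof. intros H; inversion H; subst; eauto. Qed.
Lemma prune_recv_inv X p cs : prune X (TRecv p cs) -> exists xs, X = TRecv p xs /\ Forall2 (fun x y => fst x = fst y /\ prune (snd x) (snd y)) xs cs.
Proof. intros H; inversion H; subst; eauto. Qed.
Lemma prune_fvar_l x V : prune (TFVar x) V -> V = TFVar x.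
Proof. intros H; inversion H; auto. Qed.
Lemma prune_fvar_r x V : prune V (TFVar x) -> V = TFVar x.
Proof. intros H; inversion H; auto. Qed.

Lemma lift p l b A A' : SendStep p l b A A' -> forall C, prune A C -> exists C', SendStep p l b C C' /\ prune A' C'.
Proof.
  induction 1 using SS_ind2; intros C HC.
  - inversion HC as [| | |? ? cs Hm| |]; subst. destruct (Hm _ _ _ H) as [c [Hc Pc]]. exists c. split; auto. constructor. auto.
  - inversion HC as [| | |? ? cs Hm| |]; subst.
    destruct (F2_pair _
       (fun j c => In c cs /\ fst j = fst c /\ prune (snd j) (snd c))
       (fun a' c' => fst a' = fst c' /\ prune (snd a') (snd c'))
       (fun c c' => fst c = fst c' /\ SendStep p l b (snd c) (snd c')) bsJ bs' H3) as [ccs [C's [F1 [F2 F3]]]].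
    + intros x y Hx [E [Sx IH]].
      destruct x as [[lx bx] X]. destruct (Hm _ _ _ (H0 _ Hx)) as [c [Hc Pc]].
      destruct (IH _ Pc) as [c' [S' P']].
      exists (lx, bx, c), (fst y, c'). simpl in *. repeat split; auto.
    + exists (TSend q C's). split.
      * apply ss_send with ccs; auto.
        -- eapply F2_incl; eauto. simpl. tauto.
        -- rewrite <- (Forall2_labels_gen _ _ _ F1); auto. simpl. tauto.
        -- eapply Forall2_nonnil; eauto.
      * constructor. intros l0 b0 a Hin. destruct (Forall2_In_l _ _ _ F2 _ Hin) as [[[l1 b1] c] [Hc [E P]]].
        simpl in *. inversion E; subst. eauto.
  - inversion HC as [| | | |? ? cs F|]; subst.
    destruct (F2_zip3 _ _
       (fun x w => fst x = fst w)
       (fun y w => fst y = fst w /\ prune (snd y) (snd w))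
       (fun z w => fst z = fst w /\ SendStep p l b (snd z) (snd w)) bs bs' cs H F) as [ws [F1 [F2 F3]]].
    + intros x y z Hx [E [Sx IH]] [E' Pz].
      destruct (IH _ Pz) as [c' [S' P']]. exists (fst y, c'). simpl. repeat split; auto. congruence.
    + exists (TRecv q ws). split; constructor; auto.
  - inversion HC; subst. destruct (IHSendStep (open W (TRec W))) as [C' [S' P']].
    + apply prune_open; auto; constructor; auto.
    + exists C'. split; auto. constructor; auto.
Qed.

Lemma diamond1 q l bq U U1 : SendStep q l bq U U1 -> forall p lp b, p <> q -> forall U1', SendStep p lp b U1 U1' ->
  exists U', SendStep p lp b U U' /\ SendStep q l bq U' U1'.
Proof.
  induction 1 using SS_ind2; intros p lp b Hpq U1' HH2.
  - exists (TSend q [(l,bq,U1')]). split.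
    + apply ss_send with [(l,bq,V)]; auto.
      * intros x [<-|[]]. auto.
      * simpl. constructor; [simpl; tauto|constructor].
      * congruence.
    + constructor. simpl. auto.
  - inversion HH2 as [bs0 V0 Hin| qq bsI0 K K' Hpq0 Hincl0 Hnd0 Hne0 HF0 | |]; subst.
    + destruct (Forall2_In_r _ _ _ H3 _ Hin) as [j [Hj [E [Sj _]]]].
      exists (snd j). split; auto. constructor. destruct j as [[? ?] ?]. simpl in *. inversion E; subst. auto.
    + destruct (F2_pair _
         (fun k j => In j bsI /\ fst k = fst j /\ exists k0, In k0 bs' /\ k0 = k /\ True)
         (fun k' w => fst k' = fst w /\ SendStep q l bq (snd w) (snd k'))
         (fun j w => fst j = fst w /\ SendStep p lp b (snd j) (snd w)) K K' HF0) as [js [ws [F1 [F2 F3]]]].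
      * intros k k' Hk [E Sk].
        destruct (Forall2_In_r _ _ _ H3 _ (Hincl0 _ Hk)) as [j [Hj [Ej [Sj IH]]]].
        destruct (IH _ _ _ Hpq _ Sk) as [w [Sw1 Sw2]].
        exists j, (fst k', w). simpl. repeat split; auto; try congruence. exists k. auto.
      * exists (TSend q0 ws). split.
        -- apply ss_send with js; auto.
           ++ eapply F2_incl; eauto. simpl. tauto.
           ++ rewrite <- (Forall2_labels_gen _ _ _ F1); auto. simpl. intros ? ? [? [? _]]; auto.
           ++ eapply Forall2_nonnil; eauto.
        -- apply ss_send with ws; auto.
           ++ intros x Hx; auto.
           ++ rewrite <- (Forall2_labels_gen _ _ _ F3); [|simpl; tauto].
              rewrite <- (Forall2_labels_gen _ _ _ F1); auto. simpl. intros ? ? [? [? _]]; auto.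
           ++ eapply Forall2_nonnil; [exact F3|]. eapply Forall2_nonnil; eauto.
           ++ apply F2_flip in F2. eapply Forall2_impl; [|exact F2]. simpl. intros a c [E S]. auto.
  - inversion HH2 as [| |qq bs0 bs'' HF0|]; subst.
    destruct (F2_comp _ _
       (fun x w => fst x = fst w /\ SendStep p lp b (snd x) (snd w))
       (fun w z => fst w = fst z /\ SendStep q l bq (snd w) (snd z)) bs bs' bs'' H HF0) as [ws [F1 F2]].
    + intros x y z Hx [E [Sx IH]] [E' Sy]. destruct (IH _ _ _ Hpq _ Sy) as [w [Sw1 Sw2]].
      exists (fst x, w). simpl. repeat split; auto. congruence.
    + exists (TRecv q0 ws). split; constructor; auto.
  - destruct (IHSendStep _ _ _ Hpq _ HH2) as [Ux [S1 S2]]. exists Ux. split; auto. constructor. auto.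
Qed.

Lemma NoDup_map_inj_in {A B} (g : A -> B) (Z : list A) z1 z2 : NoDup (map g Z) -> In z1 Z -> In z2 Z -> g z1 = g z2 -> z1 = z2.
Proof.
  induction Z as [|z Z IH]; simpl; [tauto|]. intros Hnd H1 H2 E. inversion Hnd as [|? ? Hn Hnd']; subst.
  destruct H1 as [<-|H1]; destruct H2 as [<-|H2]; auto.
  - exfalso. apply Hn. rewrite E. apply in_map. auto.
  - exfalso. apply Hn. rewrite <- E. apply in_map. auto.
Qed.

Lemma NoDup_map_filter {A B} (g : A -> B) (f : A -> bool) Z : NoDup (map g Z) -> NoDup (map g (filter f Z)).
Proof.
  induction Z as [|z Z IH]; simpl; auto. intros Hnd. inversion Hnd as [|? ? Hn Hnd']; subst.
  destruct (f z); simpl; auto. constructor; auto. intros Hin. apply Hn.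
  apply in_map_iff in Hin as [x [Ex Hx]]. apply filter_In in Hx as [Hx _]. rewrite <- Ex. apply in_map. auto.
Qed.

Lemma F2_map_fst {A C} (P : A -> C -> Prop) (Q : A -> C -> Prop) (Z : list A) cs :
  Forall2 P Z cs -> (forall z c, In z Z -> P z c -> Q z c) -> Forall2 Q Z cs.
Proof. intros F H. eapply Forall2_impl'; [|exact F]. intros; auto. Qed.

Lemma merge Th p l b U A : SendStep p l b U A -> wf Th U -> forall B, SendStep p l b U B ->
  exists C, SendStep p l b U C /\ prune A C /\ prune B C.
Proof.
  induction 1 using SS_ind2; intros Hw B HB.
  - inversion HB as [bs0 V0 Hin| ? ? ? ? Hpq| |]; subst; [|congruence].
    apply wf_send_inv in Hw as [_ [Hnd _]]. destruct (nodup_label_uniq _ _ _ _ _ _ Hnd H Hin) as [_ <-].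
    exists V. repeat split; auto using prune_refl.
  - apply wf_send_inv in Hw as [HneI [HndI HwI]].
    inversion HB as [| q0 bsI0 JB bsB Hpq0 HinclB HndB HneB HFB | |]; subst; [congruence|].
    destruct (F2_zs _ _ _ H3) as [ZA [EA1 [EA2 HZA]]].
    destruct (F2_zs _ _ _ HFB) as [ZB [EB1 [EB2 HZB]]]. subst bsJ bs' JB bsB.
    destruct (list_choice (fun (z : branch * branch) (c : branch) => fst c = fst (fst z) /\ SendStep p l b (snd (fst z)) (snd c) /\
         prune (snd (snd z)) (snd c) /\ forall zb, In zb ZB -> fst zb = fst z -> prune (snd (snd zb)) (snd c)) ZA) as [cs1 Hcs1].
    { intros [j a] Hz. destruct (HZA _ Hz) as [Eja [Sja IH]]. simpl in *.
      assert (Hwj : wf Th (snd j)). { destruct j as [[l1 g1] s1]. eapply HwI. apply (H0 (l1,g1,s1)). apply in_map_iff. exists (l1,g1,s1,a). split; auto. }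
      destruct (classic (exists zb, In zb ZB /\ fst zb = j)) as [[zb [Hzb Ezb]]|Hno].
      - destruct (HZB _ Hzb) as [Ejb Sjb]. rewrite Ezb in *.
        destruct (IH Hwj _ Sjb) as [C [SC [PA PB]]].
        exists (fst j, C). simpl. repeat split; auto.
        intros zb' Hzb' Ezb'. assert (zb' = zb) as ->; auto.
        eapply NoDup_map_inj_in with (g := fun z => br_label (fst z)); eauto.
        + rewrite <- map_map. auto.
        + rewrite Ezb', Ezb. auto.
      - exists (fst j, snd a). simpl. repeat split; auto using prune_refl.
        intros zb Hzb Ezb. exfalso. apply Hno. eauto. }
    unfold branch in *.
    set (ZB' := filter (fun zb : branch * branch => if in_dec Nat.eq_dec (br_label (fst zb)) (map br_label (map fst ZA)) then false else true) ZB).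
    exists (TSend q (cs1 ++ map snd ZB')). split; [|split].
    + apply ss_send with (map fst ZA ++ map fst ZB'); auto.
      * intros x Hx. apply in_app_iff in Hx as [Hx|Hx]; auto.
        apply HinclB. apply in_map_iff in Hx as [z [<- Hz]]. apply in_map. unfold ZB' in Hz. apply filter_In in Hz. tauto.
      * rewrite map_app. apply NoDup_app; auto.
        -- rewrite map_map. apply NoDup_map_filter. rewrite <- map_map. auto.
        -- intros x Hx1 Hx2. apply in_map_iff in Hx2 as [y [Ey Hy]]. apply in_map_iff in Hy as [z [<- Hz]].
           unfold ZB' in Hz. apply filter_In in Hz as [_ Hf]. subst x.
           destruct (in_dec Nat.eq_dec (br_label (fst z)) (map br_label (map fst ZA))); [discriminate|tauto].
      * intros E. apply app_eq_nil in E as [E _]. auto.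
      * apply Forall2_app.
        -- clear -Hcs1. induction Hcs1; simpl; constructor; auto. destruct H as [E [S _]]. split; auto.
        -- apply F2_of_zs. intros z Hz. unfold ZB' in Hz. apply filter_In in Hz as [Hz _]. auto.
    + constructor. intros l0 b0 a Hin. apply in_map_iff in Hin as [z [Ez Hz]].
      destruct (Forall2_In_l _ _ _ Hcs1 _ Hz) as [c [Hc [Ec [_ [Pc _]]]]].
      destruct (HZA _ Hz) as [Eza _]. exists (snd c). split.
      * apply in_app_iff. left. destruct c as [[? ?] ?]. unfold branch in *. simpl in *. assert (Hlg : (l1, g) = (l0, b0)). { transitivity (fst (snd z)). - congruence. - rewrite Ez. reflexivity. } inversion Hlg; subst; auto.
      * rewrite Ez in Pc. auto.
    + constructor. intros l0 b0 x Hin. apply in_map_iff in Hin as [zb [Ezb Hzb]].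
      destruct (HZB _ Hzb) as [Ejb _].
      destruct (in_dec Nat.eq_dec (br_label (fst zb)) (map br_label (map fst ZA))) as [Hi|Hni].
      * apply in_map_iff in Hi as [j [Ej Hj]].
        assert (j = fst zb) as ->.
        { apply (nodup_label_eq bsI); auto. apply HinclB. apply in_map. auto. }
        apply in_map_iff in Hj as [z [Ez Hz]].
        destruct (Forall2_In_l _ _ _ Hcs1 _ Hz) as [c [Hc [Ec [_ [_ Pc]]]]].
        exists (snd c). split.
        -- apply in_app_iff. left. destruct c as [[? ?] ?]. simpl in *. assert (Hlg : (l1, g) = (l0, b0)). { rewrite Ec, Ez, Ejb, Ezb. reflexivity. } inversion Hlg; subst; auto.
        -- specialize (Pc _ Hzb (eq_sym Ez)). rewrite Ezb in Pc. auto.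
      * exists x. split; auto using prune_refl. apply in_app_iff. right. rewrite <- Ezb. apply in_map.
        unfold ZB'. apply filter_In. split; auto. match goal with |- context [in_dec ?a ?b ?c] => destruct (in_dec a b c) as [e|e]; [exfalso; apply Hni; exact e | reflexivity] end.
  - apply wf_recv_inv in Hw as [_ [_ HwI]].
    inversion HB as [| | q0 bs0 bsB HFB|]; subst.
    destruct (F2_zip3 _ _
       (fun x w => fst x = fst w /\ SendStep p l b (snd x) (snd w))
       (fun y w => fst y = fst w /\ prune (snd y) (snd w))
       (fun z w => fst z = fst w /\ prune (snd z) (snd w)) bs bs' bsB H HFB) as [ws [F1 [F2 F3]]].
    + intros x y z Hx [E [Sx IH]] [E' Sz].
      destruct (IH (ltac:(destruct x as [[? ?] ?]; eauto)) _ Sz) as [C [SC [PA PB]]].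
      exists (fst x, C). simpl. repeat split; auto; congruence.
    + exists (TRecv q ws). repeat split; constructor; auto.
  - inversion HB as [| | |V0 B0 HB']; subst.
    destruct (IHSendStep (wf_rec_open _ _ Hw) _ HB') as [C [SC [PA PB]]].
    exists C. repeat split; auto. constructor; auto.
Qed.

Lemma merge_list Th p l b U : wf Th U -> forall Ws, Ws <> [] -> (forall W, In W Ws -> SendStep p l b U W) ->
  exists C, SendStep p l b U C /\ forall W, In W Ws -> prune W C.
Proof.
  intros Hw Ws. induction Ws as [|W Ws IH]; intros Hne HS; [congruence|].
  destruct Ws as [|W' Ws'].
  - exists W. split; [apply HS; simpl; auto|]. intros W0 [<-|[]]. apply prune_refl.
  - destruct IH as [C' [SC' PC']]. { congruence. } { intros; apply HS; simpl; auto. }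
    destruct (merge _ _ _ _ _ _ (HS W (or_introl eq_refl)) Hw _ SC') as [C [SC [P1 P2]]].
    exists C. split; auto. intros W0 [<-|HW0]; auto. eapply prune_trans; eauto.
Qed.

Lemma asub_prune Th T U V : asub Th T U -> prune U V -> wf Th V -> asub Th T V.
Proof.
  intros H1 H2 H3.
  apply (coind Th (fun a c => exists U, asub Th a U /\ prune U c /\ wf Th c)); [|eauto].
  clear. intros T V [U [HTU [HUV WV]]].
  destruct (asub_sim _ _ _ HTU) as [W1 [W2 [S1 [S2 [S3 [S4 S5]]]]]].
  destruct (Unf_exists _ _ W2) as [U0 HU0].
  destruct (prune_unf _ _ HU0 _ HUV) as [V0 [HV0 P0]].
  repeat split; auto.
  - intros p bs Hu l b Ti Hin. destruct (S1 _ _ Hu _ _ _ Hin) as [Ui [SUi AUi]].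
    destruct (lift _ _ _ _ _ SUi _ HUV) as [C' [SC PC]].
    exists C'. split; auto. left. exists Ui. repeat split; auto. eapply SS_wf; eauto.
  - intros p bs Hu. eapply prune_recvs; eauto.
  - intros r ws Hu. pose proof (Unf_det _ _ HV0 _ Hu); subst.
    destruct (prune_send_inv _ _ _ P0) as [xs ->]. eauto.
  - intros r ws Hu m bm Vm Hin. pose proof (Unf_det _ _ HV0 _ Hu); subst.
    destruct (prune_recv_inv _ _ _ P0) as [xs [-> F]].
    destruct (Forall2_In_r _ _ _ F _ Hin) as [[[m' bm'] Um] [HUm [E PUm]]]. simpl in *. inversion E; subst.
    destruct (S4 _ _ HU0 _ _ _ HUm) as [Tm [RTm ATm]].
    exists Tm. split; auto. left. exists Um. repeat split; auto.
    pose proof (Unf_wf _ _ _ HV0 WV) as WW. apply wf_recv_inv in WW as [_ [_ Hb]]. eauto.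
  - intros Hx. apply S5 in Hx; auto. pose proof (Unf_det _ _ HU0 _ Hx); subst.
    apply prune_fvar_l in P0. subst. auto.
  - intros Hx. pose proof (Unf_det _ _ HV0 _ Hx); subst. apply prune_fvar_r in P0. subst. apply S5; auto.
Qed.

Lemma lemmaA Th p l b : forall h T T', SSH p l b h T T' -> forall U, asub Th T U ->
  exists U', SendStep p l b U U' /\ asub Th T' U'.
Proof.
  induction h as [h IHo] using lt_wf_ind. intros T T' HS U HTU.
  destruct (asub_sim _ _ _ HTU) as [W1 [W2 [S1 [S2 [S3 [S4 S5]]]]]].
  inversion HS as [n bs V Hin | n q bsI bsJ bs' Hpq Hincl Hnd Hne HF | n q bs bs' HF | n V U0 HS'].
  - subst. eapply S1; eauto. apply Unf_self. congruence.
  - subst.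
    assert (HT' : wf Th (TSend q bs')) by (eapply SS_wf; [eapply SSH_SS; exact HS| exact W1]).
    assert (Heach : forall t', In t' bs' -> exists W Y, SendStep p l b U W /\
               SendStep q (fst (fst t')) (snd (fst t')) W Y /\ asub Th (snd t') Y).
    { intros t' Ht'. destruct (Forall2_In_r _ _ _ HF _ Ht') as [j [Hj [Ej Sj]]].
      destruct j as [[lj bj] Xj]. simpl in *.
      assert (HUT : Unf (TSend q bsI) (TSend q bsI)) by (apply Unf_self; congruence).
      destruct (S1 q bsI HUT lj bj Xj (Hincl _ Hj)) as [Uj [SUj AUj]].
      destruct (IHo n ltac:(lia) _ _ Sj Uj AUj) as [Uj' [SUj' AUj']].
      destruct (diamond1 _ _ _ _ _ SUj p l b Hpq _ SUj') as [W [SW1 SW2]].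
      exists W, Uj'. rewrite <- Ej. simpl. auto. }
    apply list_choice in Heach as [Ws HWs].
    destruct (merge_list Th p l b U W2 Ws) as [C [SC PC]].
    + eapply Forall2_nonnil; [exact HWs|]. eapply Forall2_nonnil; eauto.
    + intros W HW. destruct (Forall2_In_r _ _ _ HWs _ HW) as [t' [_ [Y [S _]]]]. auto.
    + exists C. split; auto. apply send_closure; auto.
      * eapply SS_wf; eauto.
      * intros l' b' X Hin. destruct (Forall2_In_l _ _ _ HWs _ Hin) as [W [HW [Y [_ [SY AY]]]]].
        simpl in *. destruct (lift _ _ _ _ _ SY _ (PC _ HW)) as [C' [SC' PC']].
        exists C'. split; auto. eapply asub_prune; eauto. eapply SS_wf; [exact SC'|]. eapply SS_wf; eauto.
  - subst.
    assert (HUT : Unf (TRecv q bs) (TRecv q bs)) by (apply Unf_self; congruence).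
    destruct (Recvs_RecvsH _ _ (S2 _ _ HUT)) as [g Hg].
    clear S1 S2 S3 S4 S5 HUT HS W2.
    revert U bs bs' HF HTU W1 Hg.
    induction g as [g IHi] using lt_wf_ind. intros U bs bs' HF HTU W1 Hg.
    assert (HS : SSH p l b (S n) (TRecv q bs) (TRecv q bs')) by (constructor; auto).
    destruct (asub_sim _ _ _ HTU) as [_ [W2 [_ [_ [_ [S4 _]]]]]].
    destruct (RecvsH_unf _ _ _ Hg) as [r [ws [HuU Hr]]].
    assert (Heach : forall w, In w ws -> exists w', fst w = fst w' /\ SendStep p l b (snd w) (snd w') /\
               exists Y, RecvStep r (fst (fst w)) (snd (fst w)) (TRecv q bs') Y /\ asub Th Y (snd w')).
    { intros [[m bm] W] Hin. simpl.
      destruct (S4 _ _ HuU _ _ _ Hin) as [Tm [RTm ATm]].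
      destruct (Nat.eq_dec r q) as [->|Hrq].
      - inversion RTm as [bs0 V0 Hin0| ? ? ? ? Hqq| |]; subst; [|congruence].
        destruct (Forall2_In_l _ _ _ HF _ Hin0) as [[[m' bm'] Y] [HY [E SY]]]. simpl in *. inversion E; subst.
        destruct (IHo n ltac:(lia) _ _ SY W ATm) as [W' [SW' AW']].
        exists (m', bm', W'). simpl. repeat split; auto. exists Y. split; auto. constructor. auto.
      - destruct (commuteE _ _ _ _ _ _ _ _ RTm _ _ HS) as [Y [SY RY]].
        inversion RTm as [| ? ? bsJ bs'' Hrq' Hincl Hnd Hne HF'| |]; subst; [congruence|].
        inversion SY as [| |n0 q0 bs0 ys HFY|]; subst.
        inversion Hr as [|g' ? ? HrW|]; subst; [congruence|].
        destruct (IHi g' ltac:(lia) W bs'' ys HFY ATm) as [W' [SW' AW']].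
        + eapply RS_wf; eauto.
        + eapply HrW; eauto.
        + exists (m, bm, W'). simpl. repeat split; auto. eauto. }
    apply list_choice in Heach as [ws' Hws'].
    exists (TRecv r ws'). split.
    + eapply SS_Unf_l; eauto. constructor. eapply Forall2_impl; [|exact Hws']. simpl. tauto.
    + pose proof (Unf_wf _ _ _ HuU W2) as Wr. apply wf_recv_inv in Wr as [Hne [Hnd Hb]].
      apply recv_closure.
      * eapply SS_wf; [eapply SSH_SS; exact HS| exact W1].
      * constructor.
        -- eapply Forall2_nonnil; eauto.
        -- rewrite <- (Forall2_labels_gen _ _ _ Hws'); auto. simpl. tauto.
        -- intros m bm V Hin. destruct (Forall2_In_r _ _ _ Hws' _ Hin) as [w [_ [_ [_ [Y [_ AY]]]]]].
           simpl in AY. eapply asub_wf; eauto.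
      * intros m bm V Hin. destruct (Forall2_In_r _ _ _ Hws' _ Hin) as [w [_ [E [_ [Y [RY AY]]]]]].
        simpl in *. rewrite E in RY. simpl in RY. eauto.
  - subst. destruct (IHo n ltac:(lia) _ _ HS' U) as [U' [S' A']].
    + apply asub_unfold_l. auto.
    + eauto.
Qed.

Lemma lemmaA' Th p l b T T' U : SendStep p l b T T' -> asub Th T U ->
  exists U', SendStep p l b U U' /\ asub Th T' U'.
Proof. intros H1 H2. destruct (SS_SSH _ _ _ _ _ H1) as [h Hh]. eapply lemmaA; eauto. Qed.

Lemma lemmaAr Th p l b S T T' : RecvStep p l b T T' -> asub Th S T ->
  exists S', RecvStep p l b S S' /\ asub Th S' T'.
Proof.
  intros H1 H2. apply RS_dual in H1. apply asub_dual in H2.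
  destruct (lemmaA' _ _ _ _ _ _ _ H1 H2) as [X [SX AX]].
  exists (dual X). split.
  - apply SS_dual_iff. auto.
  - apply asub_dual_iff. rewrite dual_invol. auto.
Qed.

Lemma asub_trans Th S T U : asub Th S T -> asub Th T U -> asub Th S U.
Proof.
  intros H1 H2.
  apply (coind Th (fun a c => exists T, asub Th a T /\ asub Th T c)); [|eauto].
  clear. intros S U [T [H1 H2]].
  destruct (asub_sim _ _ _ H1) as [W1 [W2 [A1 [A2 [A3 [A4 A5]]]]]].
  destruct (asub_sim _ _ _ H2) as [V1 [V2 [B1 [B2 [B3 [B4 B5]]]]]].
  repeat split; auto.
  - intros p bs Hu l b Si Hin. destruct (A1 _ _ Hu _ _ _ Hin) as [Ti [STi ATi]].
    destruct (lemmaA' _ _ _ _ _ _ _ STi H2) as [Ui [SUi AUi]]. eauto 6.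
  - intros p bs Hu. eapply lemmaB'; eauto.
  - intros p bs Hu. eapply lemmaC; eauto.
  - intros p bs Hu l b Ui Hin. destruct (B4 _ _ Hu _ _ _ Hin) as [Ti [RTi ATi]].
    destruct (lemmaAr _ _ _ _ _ _ _ RTi H1) as [Si [RSi ASi]]. eauto 6.
  - intros Hx. apply B5; auto. apply A5; auto.
  - intros Hx. apply A5; auto. apply B5; auto.
Qed.

Definition lcs (s : tvar -> styp) := forall x k u, open_rec k u (s x) = s x.

Lemma subst_open s : lcs s -> forall V k u, substf s (open_rec k u V) = open_rec k (substf s u) (substf s V).
Proof.
  intros Hs V. induction V using styp_ind2; intros k u; auto.
  - rewrite open_send, !subst_send, open_send, !bmap_comp. f_equal. apply bmap_ext. intros l0 b0 V0 Hin; fa H Hin; auto.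
  - rewrite open_recv, !subst_recv, open_recv, !bmap_comp. f_equal. apply bmap_ext. intros l0 b0 V0 Hin; fa H Hin; auto.
  - simpl. rewrite Hs. auto.
  - simpl. destruct (Nat.eqb n k); auto.
  - simpl. f_equal. auto.
Qed.

Lemma unguarded_subst s : (forall x j, ~ unguarded j (s x)) -> forall V j, unguarded j (substf s V) -> unguarded j V.
Proof. intros Hs V. induction V; simpl; auto. intros j H. exfalso. eapply Hs; eauto. Qed.

Lemma wf_subst Th' Th s k A : wf_at Th' k A -> (forall x, Th' x -> wf Th (s x)) -> (forall x j, ~ unguarded j (s x)) ->
  wf_at Th k (substf s A).
Proof.
  induction 1; intros Hs Hg.
  - constructor.
  - simpl. eapply wf_weaken; [apply Hs; auto| lia].
  - constructor. auto.
  - rewrite subst_send. constructor. + apply bmap_nil; auto. + rewrite bmap_labels; auto.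
    + intros l b V Hin. apply In_bmap in Hin as [V0 [Hin ->]]. eauto.
  - rewrite subst_recv. constructor. + apply bmap_nil; auto. + rewrite bmap_labels; auto.
    + intros l b V Hin. apply In_bmap in Hin as [V0 [Hin ->]]. eauto.
  - simpl. constructor; auto. intros Hu. apply H0. eapply unguarded_subst; eauto.
Qed.

Lemma Unf_subst s : lcs s -> forall A A0, Unf A A0 -> forall Z, Unf (substf s A0) Z -> Unf (substf s A) Z.
Proof.
  intros Hs A A0 H. induction H; intros Z HZ; auto.
  simpl. constructor. unfold open. change (TRec (substf s V)) with (substf s (TRec V)). rewrite <- subst_open; auto.
Qed.

Lemma subst_nonvar_notrec s A : (forall x, A <> TFVar x) -> (forall V, A <> TRec V) -> forall V, substf s A <> TRec V.
Proof. intros H1 H2 V. destruct A; simpl; try congruence; try (exfalso; eapply H1; eauto; fail); try (exfalso; eapply H2; eauto). Qed.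

Lemma SS_subst s : lcs s -> forall p l b T T', SendStep p l b T T' -> SendStep p l b (substf s T) (substf s T').
Proof.
  intros Hs p l b T T' H. induction H using SS_ind2.
  - rewrite subst_send. constructor. apply In_bmap_2. auto.
  - rewrite !subst_send. apply ss_send with (bmap (substf s) bsJ); auto.
    + apply incl_bmap; auto. + rewrite bmap_labels; auto. + apply bmap_nil; auto.
    + apply (Forall2_bmap (fun x y => SendStep p l b (substf s x) (substf s y))); [|auto].
      eapply Forall2_impl; [|eauto]. simpl. intros a c [E [_ H']]. auto.
  - rewrite !subst_recv. constructor.
    apply (Forall2_bmap (fun x y => SendStep p l b (substf s x) (substf s y))); [|auto].
    eapply Forall2_impl; [|eauto]. simpl. intros a c [E [_ H']]. auto.
  - simpl. constructor. unfold open in *. rewrite subst_open in IHSendStep; auto.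
Qed.

Lemma RS_subst s : lcs s -> forall p l b T T', RecvStep p l b T T' -> RecvStep p l b (substf s T) (substf s T').
Proof.
  intros Hs p l b T T' H. induction H using RS_ind2.
  - rewrite subst_recv. constructor. apply In_bmap_2. auto.
  - rewrite !subst_recv. apply rs_recv with (bmap (substf s) bsJ); auto.
    + apply incl_bmap; auto. + rewrite bmap_labels; auto. + apply bmap_nil; auto.
    + apply (Forall2_bmap (fun x y => RecvStep p l b (substf s x) (substf s y))); [|auto].
      eapply Forall2_impl; [|eauto]. simpl. intros a c [E [_ H']]. auto.
  - rewrite !subst_send. constructor.
    apply (Forall2_bmap (fun x y => RecvStep p l b (substf s x) (substf s y))); [|auto].
    eapply Forall2_impl; [|eauto]. simpl. intros a c [E [_ H']]. auto.
  - simpl. constructor. unfold open in *. rewrite subst_open in IHRecvStep; auto.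
Qed.

Lemma Sends_subst s p T : Sends p T -> Sends p (substf s T).
Proof.
  induction 1.
  - rewrite subst_send. constructor.
  - rewrite subst_send. apply sends_send. intros l b V Hin. apply In_bmap in Hin as [V0 [Hin ->]]. eauto.
  - simpl. constructor. auto.
Qed.
Lemma Recvs_subst s p T : Recvs p T -> Recvs p (substf s T).
Proof.
  induction 1.
  - rewrite subst_recv. constructor.
  - rewrite subst_recv. apply recvs_recv. intros l b V Hin. apply In_bmap in Hin as [V0 [Hin ->]]. eauto.
  - simpl. constructor. auto.
Qed.

Lemma subst_Unf s : lcs s -> forall A A0, Unf A A0 -> (forall x, A0 = TFVar x -> s x = TFVar x) ->
  Unf (substf s A) (substf s A0).
Proof.
  intros Hs A A0 H Hx. eapply Unf_subst; eauto.
  destruct A0; simpl; try (apply Unf_self; congruence).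
  - rewrite (Hx t eq_refl). apply Unf_self. congruence.
  - exfalso. eapply Unf_notrec; eauto.
Qed.

Lemma subst_eq_send s A p bs : (forall x, A = TFVar x -> s x = TFVar x) -> substf s A = TSend p bs ->
  exists bs0, A = TSend p bs0 /\ bs = bmap (substf s) bs0.
Proof.
  intros Hx E. destruct A; simpl in E; try discriminate.
  - inversion E; subst. eauto.
  - rewrite (Hx t eq_refl) in E. discriminate.
Qed.
Lemma subst_eq_recv s A p bs : (forall x, A = TFVar x -> s x = TFVar x) -> substf s A = TRecv p bs ->
  exists bs0, A = TRecv p bs0 /\ bs = bmap (substf s) bs0.
Proof.
  intros Hx E. destruct A; simpl in E; try discriminate.
  - inversion E; subst. eauto.
  - rewrite (Hx t eq_refl) in E. discriminate.
Qed.
Lemma subst_eq_fvar s A z : (forall x, A = TFVar x -> s x = TFVar x) -> substf s A = TFVar z -> A = TFVar z.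
Proof.
  intros Hx E. destruct A; simpl in E; try discriminate.
  rewrite (Hx t eq_refl) in E. auto.
Qed.

Section SubstSim.
Variables (Th' Th : tvar -> Prop) (s s' : tvar -> styp).
Hypothesis Hlc : lcs s.
Hypothesis Hlc' : lcs s'.
Hypothesis Hg : forall x j, ~ unguarded j (s x).
Hypothesis Hg' : forall x j, ~ unguarded j (s' x).
Hypothesis Hw : forall x, Th' x -> wf Th (s x) /\ wf Th (s' x).

Definition R0 a c := exists A B, a = substf s A /\ c = substf s' B /\ asub Th' A B.

Lemma wf_s A : wf Th' A -> wf Th (substf s A).
Proof. intros H. eapply wf_subst; eauto. intros x Hx. apply Hw; auto. Qed.
Lemma wf_s' A : wf Th' A -> wf Th (substf s' A).
Proof. intros H. eapply wf_subst; eauto. intros x Hx. apply Hw; auto. Qed.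

Lemma sim_nonvar A B A0 : asub Th' A B -> Unf A A0 -> (forall x, A0 = TFVar x -> s x = TFVar x /\ s' x = TFVar x) ->
  SimCond Th (fun a c => R0 a c \/ asub Th a c) (substf s A) (substf s' B).
Proof.
  intros HAB HA0 Hx.
  destruct (asub_sim _ _ _ HAB) as [W1 [W2 [S1 [S2 [S3 [S4 S5]]]]]].
  destruct (Unf_exists _ _ W2) as [B0 HB0].
  assert (HxB : forall y, B0 = TFVar y -> s y = TFVar y /\ s' y = TFVar y).
  { intros y ->. assert (Th' y) as Hy.
    { pose proof (Unf_wf _ _ _ HB0 W2) as WW. inversion WW; auto. }
    apply Hx. eapply Unf_det; eauto. apply S5; auto. }
  assert (UA : Unf (substf s A) (substf s A0)) by (apply subst_Unf; auto; intros x E; apply Hx; auto).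
  assert (UB : Unf (substf s' B) (substf s' B0)) by (apply subst_Unf; auto; intros x E; apply HxB; auto).
  repeat split.
  - apply wf_s; auto.
  - apply wf_s'; auto.
  - intros p bs Hu l b Ti Hin. pose proof (Unf_det _ _ UA _ Hu) as E.
    destruct (subst_eq_send _ _ _ _ (fun x e => proj1 (Hx x e)) E) as [bs0 [-> ->]].
    apply In_bmap in Hin as [T0 [Hin ->]].
    destruct (S1 _ _ HA0 _ _ _ Hin) as [U0 [SU0 AU0]].
    exists (substf s' U0). split. + apply SS_subst; auto. + left. exists T0, U0. auto.
  - intros p bs Hu. pose proof (Unf_det _ _ UA _ Hu) as E.
    destruct (subst_eq_recv _ _ _ _ (fun x e => proj1 (Hx x e)) E) as [bs0 [-> ->]].
    apply Recvs_subst. eauto.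
  - intros p bs Hu. pose proof (Unf_det _ _ UB _ Hu) as E.
    destruct (subst_eq_send _ _ _ _ (fun x e => proj2 (HxB x e)) E) as [bs0 [-> ->]].
    apply Sends_subst. eauto.
  - intros p bs Hu l b Ui Hin. pose proof (Unf_det _ _ UB _ Hu) as E.
    destruct (subst_eq_recv _ _ _ _ (fun x e => proj2 (HxB x e)) E) as [bs0 [-> ->]].
    apply In_bmap in Hin as [U0 [Hin ->]].
    destruct (S4 _ _ HB0 _ _ _ Hin) as [T0 [RT0 AT0]].
    exists (substf s T0). split. + apply RS_subst; auto. + left. exists T0, U0. auto.
  - intros Hz. pose proof (Unf_det _ _ UA _ Hz) as E.
    apply subst_eq_fvar in E; [|intros; apply Hx; auto]. subst A0.
    assert (Th' X) as Hy. { pose proof (Unf_wf _ _ _ HA0 W1) as WW. inversion WW; auto. }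
    assert (Unf B (TFVar X)) as HB by (apply S5; auto).
    pose proof (Unf_det _ _ HB0 _ HB); subst B0. simpl in UB. rewrite (proj2 (Hx X eq_refl)) in UB. auto.
  - intros Hz. pose proof (Unf_det _ _ UB _ Hz) as E.
    apply subst_eq_fvar in E; [|intros; apply HxB; auto]. subst B0.
    assert (Th' X) as Hy. { pose proof (Unf_wf _ _ _ HB0 W2) as WW. inversion WW; auto. }
    assert (Unf A (TFVar X)) as HA by (apply S5; auto).
    pose proof (Unf_det _ _ HA0 _ HA); subst A0. simpl in UA. rewrite (proj1 (HxB X eq_refl)) in UA. auto.
Qed.

Lemma sim_var A B x : asub Th' A B -> Unf A (TFVar x) ->
  SimCond Th (fun a c => R0 a c \/ asub Th a c) (s x) (s' x) ->
  SimCond Th (fun a c => R0 a c \/ asub Th a c) (substf s A) (substf s' B).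
Proof.
  intros HAB HA HS.
  destruct (asub_sim _ _ _ HAB) as [W1 [W2 [_ [_ [_ [_ S5]]]]]].
  assert (Th' x) as Hx. { pose proof (Unf_wf _ _ _ HA W1) as WW. inversion WW; auto. }
  assert (HB : Unf B (TFVar x)) by (apply S5; auto).
  destruct (Hw x Hx) as [Wx Wx'].
  destruct (Unf_exists _ _ Wx) as [Z HZ]. destruct (Unf_exists _ _ Wx') as [Z' HZ'].
  apply (SimCond_unf Th _ (s x) (substf s A) (s' x) (substf s' B) Z Z'); auto.
  - eapply Unf_subst; eauto.
  - eapply Unf_subst; eauto.
  - apply wf_s; auto.
  - apply wf_s'; auto.
Qed.
End SubstSim.

Lemma wf_lc Th T : wf Th T -> forall k u, open_rec k u T = T.
Proof. intros H k u. eapply wf_open_id; eauto. lia. Qed.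
Lemma wf_ng Th T : wf Th T -> forall j, ~ unguarded j T.
Proof. intros H j. eapply wf_not_unguarded; eauto. lia. Qed.

Lemma msub_var_in n X Ts Us x : (exists k, k < n /\ X k = x) ->
  exists j, j < n /\ msub_var n X Ts x = Ts j /\ msub_var n X Us x = Us j.
Proof.
  induction n; intros [k [Hk Ek]]; [lia|]. simpl.
  destruct (Nat.eqb_spec (X n) x). - exists n. auto.
  - destruct IHn as [j [Hj [E1 E2]]]. + exists k. split; auto. assert (k <> n) by congruence. lia.
    + exists j. split; auto.
Qed.

Lemma msub_var_cases n X Ts x : (exists j, j < n /\ msub_var n X Ts x = Ts j) \/ msub_var n X Ts x = TFVar x.
Proof.
  induction n; simpl; auto. destruct (Nat.eqb (X n) x). - left. exists n. auto.
  - destruct IHn as [[j [Hj E]]|E]; auto. left. exists j. split; auto.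
Qed.

Lemma part_vi Th n X Ts Us T U :
  asub (fun Y => exists k, k < n /\ X k = Y) T U ->
  (forall k, k < n -> asub Th (Ts k) (Us k)) ->
  asub Th (msubst n X Ts T) (msubst n X Us U).
Proof.
  intros HTU HK. unfold msubst.
  set (Th' := fun Y => exists k, k < n /\ X k = Y) in *.
  set (s := msub_var n X Ts). set (s' := msub_var n X Us).
  assert (Hlc : lcs s).
  { intros x k u. unfold s. destruct (msub_var_cases n X Ts x) as [[j [Hj E]]|E]; rewrite E; auto.
    destruct (asub_wf _ _ _ (HK j Hj)). eapply wf_lc; eauto. }
  assert (Hlc' : lcs s').
  { intros x k u. unfold s'. destruct (msub_var_cases n X Us x) as [[j [Hj E]]|E]; rewrite E; auto.
    destruct (asub_wf _ _ _ (HK j Hj)). eapply wf_lc; eauto. }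
  assert (Hg : forall x j, ~ unguarded j (s x)).
  { intros x j. unfold s. destruct (msub_var_cases n X Ts x) as [[i [Hi E]]|E]; rewrite E; simpl; auto.
    destruct (asub_wf _ _ _ (HK i Hi)). eapply wf_ng; eauto. }
  assert (Hg' : forall x j, ~ unguarded j (s' x)).
  { intros x j. unfold s'. destruct (msub_var_cases n X Us x) as [[i [Hi E]]|E]; rewrite E; simpl; auto.
    destruct (asub_wf _ _ _ (HK i Hi)). eapply wf_ng; eauto. }
  assert (Hpair : forall x, Th' x -> asub Th (s x) (s' x)).
  { intros x Hx. destruct (msub_var_in n X Ts Us x Hx) as [j [Hj [E1 E2]]]. unfold s, s'. rewrite E1, E2. auto. }
  assert (Hw : forall x, Th' x -> wf Th (s x) /\ wf Th (s' x)) by (intros; apply asub_wf; auto).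
  apply (coind Th (R0 Th' s s')); [|exists T, U; auto].
  intros a c [A [B [-> [-> HAB]]]].
  destruct (asub_wf _ _ _ HAB) as [W1 _].
  destruct (Unf_exists _ _ W1) as [A0 HA0].
  destruct (classic (exists x, A0 = TFVar x)) as [[x ->]|Hnv].
  - apply (sim_var Th' Th s s' Hlc Hlc' Hg Hg' Hw A B x); auto.
    assert (Th' x) as Hx. { pose proof (Unf_wf _ _ _ HA0 W1) as WW. inversion WW; auto. }
    apply (SimCond_mono Th (asub Th)); auto. apply asub_sim. auto.
  - apply (sim_nonvar Th' Th s s' Hlc Hlc' Hg Hg' Hw A B A0); auto.
    intros x E. exfalso. apply Hnv. eauto.
Qed.

Lemma open_close_subst Th k T : wf_at Th k T -> forall X u,
  open_rec k u (close_rec k X T) = substf (fun y => if Nat.eqb y X then u else TFVar y) T.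
Proof.
  induction 1; intros X u.
  - reflexivity.
  - simpl. destruct (Nat.eqb x X); simpl; auto. rewrite Nat.eqb_refl. auto.
  - simpl. destruct (Nat.eqb_spec n k); auto. lia.
  - rewrite close_send, open_send, subst_send, bmap_comp. f_equal. apply bmap_ext. intros; eauto.
  - rewrite close_recv, open_recv, subst_recv, bmap_comp. f_equal. apply bmap_ext. intros; eauto.
  - simpl. f_equal. auto.
Qed.

Lemma part_v Th X T U : ~ Th X -> asub (fun Y => Th Y \/ Y = X) T U -> wf Th (mu X T) -> wf Th (mu X U) ->
  asub Th (mu X T) (mu X U).
Proof.
  intros HX HTU WT WU.
  set (Th' := fun Y => Th Y \/ Y = X) in *.
  set (s := fun y => if Nat.eqb y X then mu X T else TFVar y).
  set (s' := fun y => if Nat.eqb y X then mu X U else TFVar y).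
  assert (Hlc : lcs s). { intros x k u. unfold s. destruct (Nat.eqb x X); auto. eapply wf_lc; eauto. }
  assert (Hlc' : lcs s'). { intros x k u. unfold s'. destruct (Nat.eqb x X); auto. eapply wf_lc; eauto. }
  assert (Hg : forall x j, ~ unguarded j (s x)). { intros x j. unfold s. destruct (Nat.eqb x X); [eapply wf_ng; eauto | simpl; auto]. }
  assert (Hg' : forall x j, ~ unguarded j (s' x)). { intros x j. unfold s'. destruct (Nat.eqb x X); [eapply wf_ng; eauto | simpl; auto]. }
  assert (Hw : forall x, Th' x -> wf Th (s x) /\ wf Th (s' x)).
  { intros x Hx. unfold Th' in Hx. unfold s, s'. destruct (Nat.eqb_spec x X); subst; [tauto|]. destruct Hx as [Hx|Hx]; [|congruence]. split; constructor; auto. }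
  destruct (asub_wf _ _ _ HTU) as [WT' WU'].
  (* guardedness: T and U do not unfold to X *)
  assert (GT : ~ Unf T (TFVar X)).
  { intros HH. pose proof (Unf_fvar_hd _ _ _ WT' HH) as Hh. inversion WT as [| | | | |? ? _ Hgd]; subst.
    apply Hgd. apply close_hd_unguarded. auto. }
  assert (GU : ~ Unf U (TFVar X)).
  { intros HH. pose proof (Unf_fvar_hd _ _ _ WU' HH) as Hh. inversion WU as [| | | | |? ? _ Hgd]; subst.
    apply Hgd. apply close_hd_unguarded. auto. }
  assert (EsT : open (close_rec 0 X T) (mu X T) = substf s T) by (apply open_close_subst with Th'; auto).
  assert (EsU : open (close_rec 0 X U) (mu X U) = substf s' U) by (apply open_close_subst with Th'; auto).
  apply (coind Th (R0 Th' s s')).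
  2:{ exists (TFVar X), (TFVar X). unfold s, s'. simpl. rewrite Nat.eqb_refl. repeat split; auto.
      apply asub_refl. constructor. unfold Th'. auto. }
  intros a c [A [B [-> [-> HAB]]]].
  destruct (asub_wf _ _ _ HAB) as [W1 _].
  destruct (Unf_exists _ _ W1) as [A0 HA0].
  assert (Hnonvar : forall A B A0, asub Th' A B -> Unf A A0 -> A0 <> TFVar X ->
     SimCond Th (fun a c => R0 Th' s s' a c \/ asub Th a c) (substf s A) (substf s' B)).
  { intros A1 B1 A2 HAB1 HA2 Hne. apply (sim_nonvar Th' Th s s' Hlc Hlc' Hg Hg' Hw A1 B1 A2); auto.
    intros x ->. unfold s, s'. destruct (Nat.eqb_spec x X); [subst; congruence|]. auto. }
  destruct (classic (A0 = TFVar X)) as [->|Hne]; [|eapply Hnonvar; eauto].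
  apply (sim_var Th' Th s s' Hlc Hlc' Hg Hg' Hw A B X); auto.
  unfold s, s'. rewrite Nat.eqb_refl.
  destruct (Unf_exists _ _ WT') as [T0 HT0].
  destruct (Unf_exists _ _ WU') as [U0 HU0].
  assert (WsT : wf Th (substf s T)) by (eapply wf_s; eauto).
  assert (WsU : wf Th (substf s' U)) by (eapply wf_s'; eauto).
  destruct (Unf_exists _ _ WsT) as [Z HZ]. destruct (Unf_exists _ _ WsU) as [Z' HZ'].
  apply (SimCond_unf Th _ (substf s T) (mu X T) (substf s' U) (mu X U) Z Z'); auto.
  - unfold mu. constructor. rewrite <- EsT in HZ. auto.
  - unfold mu. constructor. rewrite <- EsU in HZ'. auto.
  - eapply Hnonvar; eauto. intros E; subst. auto.
Qed.

Theorem lemma1 :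
  (forall (Theta : tvar -> Prop) (T : styp), wf Theta T -> asub Theta T T) /\
  (forall (Theta : tvar -> Prop) (S T U : styp),
      asub Theta S T -> asub Theta T U -> asub Theta S U) /\
  (forall (Theta : tvar -> Prop) (p : participant) (I J : list nat)
          (l : nat -> label) (b : nat -> ground) (T U : nat -> styp),
      incl J I ->
      wf Theta (TSend p (branches J l b T)) ->
      wf Theta (TSend p (branches I l b U)) ->
      (forall i, In i J -> asub Theta (T i) (U i)) ->
      asub Theta (TSend p (branches J l b T)) (TSend p (branches I l b U))) /\
  (forall (Theta : tvar -> Prop) (p : participant) (I J : list nat)
          (l : nat -> label) (b : nat -> ground) (T U : nat -> styp),
      incl J I ->
      wf Theta (TRecv p (branches I l b T)) ->
      wf Theta (TRecv p (branches J l b U)) ->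
      (forall i, In i J -> asub Theta (T i) (U i)) ->
      asub Theta (TRecv p (branches I l b T)) (TRecv p (branches J l b U))) /\
  (forall (Theta : tvar -> Prop) (X : tvar) (T U : styp),
      ~ Theta X ->
      asub (fun Y => Theta Y \/ Y = X) T U ->
      wf Theta (mu X T) -> wf Theta (mu X U) ->
      asub Theta (mu X T) (mu X U)) /\
  (forall (Theta : tvar -> Prop) (n : nat) (X : nat -> tvar) (Ts Us : nat -> styp) (T U : styp),
      (forall i j, i < n -> j < n -> X i = X j -> i = j) ->
      asub (fun Y => exists k, k < n /\ X k = Y) T U ->
      (forall k, k < n -> asub Theta (Ts k) (Us k)) ->
      wf Theta (msubst n X Ts T) -> wf Theta (msubst n X Us U) ->
      asub Theta (msubst n X Ts T) (msubst n X Us U)).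
Proof.
  split; [exact asub_refl|]. split; [exact asub_trans|]. split; [|split; [|split]].
  - intros Th p I J l b T U HJI W1 W2 H. apply send_closure; auto.
    intros l' b' X Hin. unfold branches in Hin. apply in_map_iff in Hin as [i [E Hi]]. inversion E; subst.
    exists (U i). split; auto. constructor. unfold branches. apply in_map_iff. exists i. auto.
  - intros Th p I J l b T U HJI W1 W2 H. apply recv_closure; auto.
    intros m bm V Hin. unfold branches in Hin. apply in_map_iff in Hin as [i [E Hi]]. inversion E; subst.
    exists (T i). split; auto. constructor. unfold branches. apply in_map_iff. exists i. auto.
  - intros. apply part_v; auto.
  - intros. apply part_vi; auto.
Qed.
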